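(* Let $p\in[1,\infty]$ and $q$ with $\frac1p+\frac1q=1$. Let $f=(f_i)_{i\in\mathbb N}\in\ell_q$ with $f_i\ge0$ for all $i$, and let $(t_i)_{i\in\mathbb N}$ satisfy $0\le t_i\le 1$ for all $i$ and $\limsup_{i\to\infty}t_i<1$. Define bounded operators on $\ell_p$ by $Fx=\big(\sum_{i=1}^\infty f_ix_i,0,0,\dots\big)$ and $Tx=(0,t_1x_1,t_2x_2,\dots)$, and let $A=T+F$. Then $F$ is bounded and preserves $\ell_p^+=\{x\in\ell_p:x_i\ge0\ \forall i\}$, and $$R_0:=r\big(F(I-T)^{-1}\big)=f_1+\sum_{i=2}^\infty f_i\prod_{j=1}^{i-1}t_j,$$ and exactly one of the following holds: $R_0\ge r(A)>1$; $R_0=r(A)=1$; $R_0\le r(A)<1$.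
   Context: $r(\cdot)$ denotes the spectral radius (of the complexified operator). $\ell_p^+$ is a generating and normal cone in $\ell_p$. *)

(* Defs.v *)
From Stdlib Require Import Reals Lra.
From Coquelicot Require Import Coquelicot.
Open Scope R_scope.

(* a^p for a >= 0 and real p > 0, with the convention 0^p = 0 *)
Definition pw (a p : R) : R := if Rle_dec a 0 then 0 else Rpower a p.

(* Membership in l_p of a sequence, given the sequence of absolute values a. *)
Definition lp_mem (p : Rbar) (a : nat -> R) : Prop :=
  match p with
  | Finite p0 => ex_series (fun i => pw (a i) p0)
  | p_infty => exists M : R, forall i, a i <= M
  | m_infty => False
  end.

Definition lp_norm (p : Rbar) (a : nat -> R) : R :=
  match p with
  | Finite p0 => pw (Series (fun i => pw (a i) p0)) (/ p0)
  | p_infty => real (Lub_Rbar (fun y => exists i, y = a i))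
  | m_infty => 0
  end.

(* A (possibly nonlinear, but here always linear) map on sequences with values
   in V, with modulus nm, is a bounded operator on l_p(V). *)
Definition bounded_on {V : Type} (nm : V -> R) (p : Rbar)
    (A : (nat -> V) -> (nat -> V)) : Prop :=
  (forall x, lp_mem p (fun i => nm (x i)) -> lp_mem p (fun i => nm (A x i))) /\
  exists M : R, forall x, lp_mem p (fun i => nm (x i)) ->
    lp_norm p (fun i => nm (A x i)) <= M * lp_norm p (fun i => nm (x i)).

Definition in_lpR (p : Rbar) (x : nat -> R) := lp_mem p (fun i => Rabs (x i)).
Definition in_lpC (p : Rbar) (x : nat -> C) := lp_mem p (fun i => Cmod (x i)).

Definition in_spectrum (p : Rbar) (A : (nat -> C) -> (nat -> C)) (l : C) : Prop :=
  ~ exists S : (nat -> C) -> (nat -> C),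
      bounded_on Cmod p S /\
      (forall x, in_lpC p x ->
         (forall i, S (fun j => Cminus (Cmult l (x j)) (A x j)) i = x i) /\
         (forall i, Cminus (Cmult l (S x i)) (A (S x) i) = x i)).

Definition spec_rad (p : Rbar) (A : (nat -> C) -> (nat -> C)) : Rbar :=
  Lub_Rbar (fun r => exists l, in_spectrum p A l /\ r = Cmod l).

(* The operators of the statement (indices shifted: paper's index i is i-1 here). *)
Definition FR (f : nat -> R) (x : nat -> R) : nat -> R :=
  fun n => match n with O => Series (fun i => f i * x i) | S _ => 0 end.

Definition FC (f : nat -> R) (x : nat -> C) : nat -> C :=
  fun n => match n with
           | O => (Series (fun i => f i * fst (x i)), Series (fun i => f i * snd (x i)))
           | S _ => RtoC 0
           end.

Definition TC (t : nat -> R) (x : nat -> C) : nat -> C :=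
  fun n => match n with O => RtoC 0 | S k => Cmult (RtoC (t k)) (x k) end.

Definition AC (f t : nat -> R) (x : nat -> C) : nat -> C :=
  fun n => Cplus (TC t x n) (FC f x n).

Definition IminusTC (t : nat -> R) (x : nat -> C) : nat -> C :=
  fun n => Cminus (x n) (TC t x n).

Fixpoint tprod (t : nat -> R) (n : nat) : R :=
  match n with O => 1 | S k => tprod t k * t k end.

(* Main.v *)
Require Import Defs.
From Stdlib Require Import Reals.
From Coquelicot Require Import Coquelicot.
Open Scope R_scope.
From Stdlib Require Import Lra Lia FunctionalExtensionality Classical.


Lemma pw_nonneg a p : 0 <= pw a p.
Proof. unfold pw. destruct (Rle_dec a 0). lra. unfold Rpower. left; apply exp_pos. Qed.

Lemma pw_0 p : pw 0 p = 0.
Proof. unfold pw. destruct (Rle_dec 0 0); lra. Qed.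

Lemma pw_pos a p : 0 < a -> pw a p = Rpower a p.
Proof. intros. unfold pw. destruct (Rle_dec a 0); lra. Qed.

Lemma pw_le a b p : 0 < p -> 0 <= a <= b -> pw a p <= pw b p.
Proof.
  intros Hp [Ha Hab]. destruct (Req_dec a 0) as [->|Ha0].
  - rewrite pw_0. apply pw_nonneg.
  - rewrite !pw_pos by lra. apply Rle_Rpower_l; lra.
Qed.

Lemma pw_lt a b p : 0 < p -> 0 <= a < b -> pw a p < pw b p.
Proof.
  intros Hp [Ha Hab]. rewrite (pw_pos b) by lra. destruct (Req_dec a 0) as [->|Ha0].
  - rewrite pw_0. unfold Rpower; apply exp_pos.
  - rewrite !pw_pos by lra. apply Rlt_Rpower_l; lra.
Qed.

Lemma pw_mult a b p : 0 <= a -> 0 <= b -> pw (a*b) p = pw a p * pw b p.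
Proof.
  intros Ha Hb. destruct (Req_dec a 0) as [->|Ha0]. rewrite Rmult_0_l, pw_0; ring.
  destruct (Req_dec b 0) as [->|Hb0]. rewrite Rmult_0_r, pw_0; ring.
  rewrite !pw_pos by (try apply Rmult_lt_0_compat; lra).
  rewrite Rpower_mult_distr; lra.
Qed.

Lemma pw_pw a p : p <> 0 -> 0 <= a -> pw (pw a p) (/p) = a.
Proof.
  intros Hp Ha. destruct (Req_dec a 0) as [->|Ha0]. rewrite !pw_0; auto.
  rewrite (pw_pos a) by lra. rewrite pw_pos by (unfold Rpower; apply exp_pos).
  rewrite Rpower_mult, Rinv_r by auto. apply Rpower_1; lra.
Qed.

Lemma pw_pw' a p : p <> 0 -> 0 <= a -> pw (pw a (/p)) p = a.
Proof.
  intros Hp Ha. rewrite <- (Rinv_inv p) at 2. apply pw_pw; auto. apply Rinv_neq_0_compat; auto.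
Qed.

Lemma pw_1 a : 0 <= a -> pw a 1 = a.
Proof. intros Ha. destruct (Req_dec a 0) as [->|Ha0]. apply pw_0. rewrite pw_pos by lra. apply Rpower_1; lra. Qed.

Lemma Rpower_1_base y : Rpower 1 y = 1.
Proof. unfold Rpower. rewrite ln_1, Rmult_0_r. apply exp_0. Qed.

Lemma pw_lt1 a p : 0 < p -> 0 <= a < 1 -> pw a p < 1.
Proof. intros. rewrite <- (Rpower_1_base p). rewrite <- (pw_pos 1) by lra. apply pw_lt; lra. Qed.

Lemma pw_ge1 a p : 0 <= p -> 1 <= a -> 1 <= pw a p.
Proof.
  intros. rewrite pw_pos by lra. rewrite <- (Rpower_O a) by lra. apply Rle_Rpower; lra.
Qed.

Lemma pw_eq0 a p : 0 <= a -> pw a p = 0 -> a = 0.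
Proof.
  intros Ha H. destruct (Req_dec a 0); auto. rewrite pw_pos in H by lra.
  unfold Rpower in H. pose proof (exp_pos (p * ln a)). lra.
Qed.

Lemma series_bounded (a : nat -> R) (M : R) :
  (forall n, 0 <= a n) -> (forall N, sum_n a N <= M) -> ex_series a /\ Series a <= M.
Proof.
  intros Ha HM.
  assert (Hinc : forall n, sum_n a n <= sum_n a (S n)).
  { intros n. rewrite sum_Sn. unfold plus; simpl. specialize (Ha (S n)). lra. }
  destruct (ex_finite_lim_seq_incr _ M Hinc HM) as [l Hl].
  assert (Hs : is_series a l) by exact Hl.
  split. exists l; auto.
  rewrite (is_series_unique _ _ Hs).
  assert (Rbar_le l M). { apply (is_lim_seq_le (sum_n a) (fun _ => M) l M); auto. apply is_lim_seq_const. }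
  simpl in H; auto.
Qed.

Lemma sum_n_mono (a : nat -> R) N n :
  (forall n, 0 <= a n) -> (N <= n)%nat -> sum_n a N <= sum_n a n.
Proof.
  intros Ha H. induction H. lra.
  rewrite sum_Sn. unfold plus; simpl. specialize (Ha (S m)). lra.
Qed.

Lemma sum_n_le_series (a : nat -> R) N :
  (forall n, 0 <= a n) -> ex_series a -> sum_n a N <= Series a.
Proof.
  intros Ha [l Hl]. rewrite (is_series_unique _ _ Hl).
  assert (Rbar_le (sum_n a N) l).
  { apply (is_lim_seq_le_loc (fun _ => sum_n a N) (sum_n a)); auto. 2: apply is_lim_seq_const.
    exists N. intros n Hn. apply sum_n_mono; auto. }
  simpl in H; auto.
Qed.

Lemma term_le_series (a : nat -> R) N :
  (forall n, 0 <= a n) -> ex_series a -> a N <= Series a.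
Proof.
  intros Ha Hs. eapply Rle_trans. 2: apply (sum_n_le_series a N); auto.
  destruct N. rewrite sum_O; lra.
  rewrite sum_Sn. unfold plus; simpl.
  assert (0 <= sum_n a N). { eapply Rle_trans. 2: apply (sum_n_mono a 0); auto; lia. rewrite sum_O; auto. }
  lra.
Qed.

Lemma Series_nonneg (a : nat -> R) : (forall n, 0 <= a n) -> ex_series a -> 0 <= Series a.
Proof. intros. eapply Rle_trans. apply (H 0%nat). apply term_le_series; auto. Qed.

Lemma Series_zero_inv (a : nat -> R) n : (forall n, 0 <= a n) -> ex_series a -> Series a = 0 -> a n = 0.
Proof. intros. pose proof (term_le_series a n H H0). specialize (H n). lra. Qed.

Lemma Series_0' : Series (fun _ => 0) = 0.
Proof. rewrite (Series_ext _ (fun n => 0 * 0)) by (intros; ring). rewrite Series_scal_l; ring. Qed.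

Lemma sum_n_zero N : sum_n (fun _ => 0) N = 0.
Proof. induction N. rewrite sum_O; auto. rewrite sum_Sn, IHN. unfold plus; simpl; ring. Qed.

Lemma ex_series_0' : ex_series (fun _ => 0).
Proof. apply (proj1 (series_bounded _ 0 (fun _ => Rle_refl 0) (fun N => Req_le _ _ (sum_n_zero N)))). Qed.


Lemma ex_series_scalR c a : ex_series a -> ex_series (fun n => c * a n).
Proof. intros H. exact (ex_series_scal_l c a H). Qed.
Lemma ex_series_plusR a b : ex_series a -> ex_series b -> ex_series (fun n => a n + b n).
Proof. intros H1 H2. exact (ex_series_plus a b H1 H2). Qed.
Lemma ex_series_leR (a b : nat -> R) : (forall n, 0 <= a n <= b n) -> ex_series b -> ex_series a.
Proof. intros H Hb. apply (ex_series_le a b); auto. intros n. unfold norm; simpl. unfold abs; simpl.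
  rewrite Rabs_pos_eq; apply H. Qed.

Lemma p_cases p : Rbar_le 1 p -> (exists p0, p = Finite p0 /\ 1 <= p0) \/ p = p_infty.
Proof. destruct p; simpl; intros H; try contradiction. left; eauto. right; auto. Qed.

Lemma sup_facts (a : nat -> R) : (forall i, 0 <= a i) -> (exists M, forall i, a i <= M) ->
  (forall i, a i <= lp_norm p_infty a) /\ (forall B, (forall i, a i <= B) -> lp_norm p_infty a <= B).
Proof.
  intros Ha [M HM]. unfold lp_norm.
  destruct (Lub_Rbar_correct (fun y => exists i, y = a i)) as [Hub Hl].
  destruct (Lub_Rbar (fun y => exists i, y = a i)) eqn:HE.
  - split.
    + intros i. specialize (Hub (a i) (ex_intro _ i eq_refl)). simpl in *. auto.
    + intros B HB. assert (Hu : is_ub_Rbar (fun y => exists i, y = a i) B).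
      { intros x [i ->]. simpl; auto. } specialize (Hl B Hu). simpl in *. auto.
  - exfalso. assert (Hu : is_ub_Rbar (fun y => exists i, y = a i) M).
    { intros x [i ->]. simpl; auto. } specialize (Hl M Hu). simpl in Hl. auto.
  - exfalso. specialize (Hub (a 0%nat) (ex_intro _ 0%nat eq_refl)). simpl in Hub. auto.
Qed.

Lemma lp_norm_nonneg p a : Rbar_le 1 p -> (forall i, 0 <= a i) -> lp_mem p a -> 0 <= lp_norm p a.
Proof.
  intros Hp Ha Hm. destruct (p_cases p Hp) as [[p0 [-> Hp0]]| ->].
  - simpl. apply pw_nonneg.
  - destruct (sup_facts a Ha Hm) as [H1 _]. eapply Rle_trans. apply (Ha 0%nat). apply H1.
Qed.

Lemma lp_mono p a b c : Rbar_le 1 p -> 0 <= c -> (forall i, 0 <= b i) ->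
  (forall i, 0 <= a i <= c * b i) -> lp_mem p b ->
  lp_mem p a /\ lp_norm p a <= c * lp_norm p b.
Proof.
  intros Hp Hc Hb Hab Hm. destruct (p_cases p Hp) as [[p0 [-> Hp0]]| ->].
  - simpl in *.
    assert (Hpt : forall i, 0 <= pw (a i) p0 <= pw c p0 * pw (b i) p0).
    { intros i. split. apply pw_nonneg. rewrite <- pw_mult by auto. apply pw_le. lra. apply Hab. }
    assert (Hex : ex_series (fun i => pw (a i) p0)).
    { eapply ex_series_leR. apply Hpt. apply ex_series_scalR; auto. }
    split; auto.
    assert (Hs : Series (fun i => pw (a i) p0) <= pw c p0 * Series (fun i => pw (b i) p0)).
    { rewrite <- Series_scal_l. apply Series_le; auto. apply ex_series_scalR; auto. }
    rewrite <- (pw_pw c p0) by lra.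
    rewrite <- pw_mult.
    2: apply pw_nonneg.
    2: apply Series_nonneg; auto; intros; apply pw_nonneg.
    apply pw_le. apply Rinv_0_lt_compat; lra. split; auto.
    apply Series_nonneg; auto; intros; apply pw_nonneg.
  - simpl in Hm. destruct (sup_facts b Hb Hm) as [H1 H2].
    assert (Hbd : forall i, a i <= c * lp_norm p_infty b).
    { intros i. eapply Rle_trans. apply Hab. apply Rmult_le_compat_l; auto. }
    split. simpl. eauto.
    apply (sup_facts a (fun i => proj1 (Hab i)) (ex_intro _ _ Hbd)). auto.
Qed.

Lemma pw_max a b p : 0 <= a -> 0 <= b -> pw (Rmax a b) p <= pw a p + pw b p.
Proof. intros. unfold Rmax. destruct (Rle_dec a b); pose proof (pw_nonneg a p); pose proof (pw_nonneg b p); lra. Qed.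

Lemma lp_add p a b : Rbar_le 1 p -> (forall i, 0 <= a i) -> (forall i, 0 <= b i) ->
  lp_mem p a -> lp_mem p b ->
  lp_mem p (fun i => a i + b i) /\ lp_norm p (fun i => a i + b i) <= 4 * (lp_norm p a + lp_norm p b).
Proof.
  intros Hp Ha Hb Hma Hmb.
  pose proof (lp_norm_nonneg p a Hp Ha Hma). pose proof (lp_norm_nonneg p b Hp Hb Hmb).
  destruct (p_cases p Hp) as [[p0 [-> Hp0]]| ->].
  - simpl in *.
    assert (Hpt : forall i, 0 <= pw (a i + b i) p0 <= pw 2 p0 * (pw (a i) p0 + pw (b i) p0)).
    { intros i. split. apply pw_nonneg. eapply Rle_trans.
      apply (pw_le _ (2 * Rmax (a i) (b i))). lra. split. specialize (Ha i); specialize (Hb i); lra.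
      unfold Rmax; destruct (Rle_dec (a i) (b i)); specialize (Ha i); specialize (Hb i); lra.
      rewrite pw_mult by (try lra; unfold Rmax; destruct (Rle_dec (a i) (b i)); auto).
      apply Rmult_le_compat_l. apply pw_nonneg. apply pw_max; auto. }
    assert (Hex2 : ex_series (fun i => pw (a i) p0 + pw (b i) p0)) by (apply ex_series_plusR; auto).
    assert (Hex : ex_series (fun i => pw (a i + b i) p0)).
    { eapply ex_series_leR. apply Hpt. apply ex_series_scalR; auto. }
    split; auto.
    set (Sa := Series (fun i => pw (a i) p0)). set (Sb := Series (fun i => pw (b i) p0)).
    assert (HSa : 0 <= Sa) by (apply Series_nonneg; auto; intros; apply pw_nonneg).
    assert (HSb : 0 <= Sb) by (apply Series_nonneg; auto; intros; apply pw_nonneg).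
    assert (Hs : Series (fun i => pw (a i + b i) p0) <= pw 2 p0 * (2 * Rmax Sa Sb)).
    { eapply Rle_trans. apply Series_le. apply Hpt. apply ex_series_scalR; auto.
      rewrite Series_scal_l. apply Rmult_le_compat_l. apply pw_nonneg.
      rewrite Series_plus by auto. fold Sa Sb. unfold Rmax; destruct (Rle_dec Sa Sb); lra. }
    assert (HM : 0 <= Rmax Sa Sb) by (unfold Rmax; destruct (Rle_dec Sa Sb); lra).
    eapply Rle_trans. apply pw_le. apply Rinv_0_lt_compat; lra.
    split. apply Series_nonneg; auto; intros; apply pw_nonneg. apply Hs.
    rewrite !pw_mult by (try apply pw_nonneg; lra).
    rewrite pw_pw by lra.
    assert (H2 : pw 2 (/ p0) <= 2).
    { rewrite pw_pos by lra. rewrite <- (Rpower_1 2) at 2 by lra. apply Rle_Rpower. lra.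
      rewrite <- Rinv_1. apply Rinv_le_contravar; lra. }
    pose proof (pw_max Sa Sb (/p0) HSa HSb). fold Sa Sb in H, H0.
    pose proof (pw_nonneg 2 (/p0)). pose proof (pw_nonneg (Rmax Sa Sb) (/p0)).
    assert (pw 2 (/ p0) * pw (Rmax Sa Sb) (/ p0) <= 2 * (pw Sa (/ p0) + pw Sb (/ p0))).
    { apply Rmult_le_compat; auto. }
    lra.
  - simpl in Hma, Hmb. destruct (sup_facts a Ha Hma) as [A1 A2]. destruct (sup_facts b Hb Hmb) as [B1 B2].
    assert (Hbd : forall i, a i + b i <= lp_norm p_infty a + lp_norm p_infty b).
    { intros i. specialize (A1 i). specialize (B1 i). lra. }
    assert (Hn : forall i, 0 <= a i + b i) by (intros i; specialize (Ha i); specialize (Hb i); lra).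
    split. simpl; eauto.
    destruct (sup_facts _ Hn (ex_intro _ _ Hbd)) as [_ C2]. specialize (C2 _ Hbd). simpl in *. lra.
Qed.

Lemma lp_comb p c a b K1 K2 : Rbar_le 1 p -> 0 <= K1 -> 0 <= K2 ->
  (forall i, 0 <= a i) -> (forall i, 0 <= b i) -> lp_mem p a -> lp_mem p b ->
  (forall i, 0 <= c i <= K1 * a i + K2 * b i) ->
  lp_mem p c /\ lp_norm p c <= 4 * (K1 * lp_norm p a + K2 * lp_norm p b).
Proof.
  intros Hp HK1 HK2 Ha Hb Hma Hmb Hc.
  destruct (lp_mono p (fun i => K1 * a i) a K1 Hp HK1 Ha) as [M1 N1]; auto.
  { intros i; split. apply Rmult_le_pos; auto. lra. }
  destruct (lp_mono p (fun i => K2 * b i) b K2 Hp HK2 Hb) as [M2 N2]; auto.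
  { intros i; split. apply Rmult_le_pos; auto. lra. }
  assert (Hn1 : forall i, 0 <= K1 * a i) by (intros; apply Rmult_le_pos; auto).
  assert (Hn2 : forall i, 0 <= K2 * b i) by (intros; apply Rmult_le_pos; auto).
  destruct (lp_add p _ _ Hp Hn1 Hn2 M1 M2) as [M3 N3].
  destruct (lp_mono p c _ 1 Hp ltac:(lra) (fun i => Rplus_le_le_0_compat _ _ (Hn1 i) (Hn2 i))) as [M4 N4]; auto.
  { intros i. rewrite Rmult_1_l. apply Hc. }
  split; auto. lra.
Qed.

Definition shift (a : nat -> R) : nat -> R := fun n => match n with O => 0 | S k => a k end.

Lemma lp_shift p a : Rbar_le 1 p -> (forall i, 0 <= a i) -> lp_mem p a ->
  lp_mem p (shift a) /\ lp_norm p (shift a) <= lp_norm p a.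
Proof.
  intros Hp Ha Hm. destruct (p_cases p Hp) as [[p0 [-> Hp0]]| ->].
  - simpl in *.
    assert (Hex : ex_series (fun i => pw (shift a i) p0)).
    { apply ex_series_incr_1. simpl. auto. }
    split; auto. rewrite Series_incr_1 by auto. simpl. rewrite pw_0, Rplus_0_l. lra.
  - simpl in Hm. destruct (sup_facts a Ha Hm) as [A1 A2].
    assert (Hs : forall i, shift a i <= lp_norm p_infty a).
    { intros [|i]; simpl. eapply Rle_trans. apply (Ha 0%nat). apply A1. apply A1. }
    assert (Hn : forall i, 0 <= shift a i). { intros [|i]; simpl; auto; lra. }
    split. simpl; eauto. apply (sup_facts _ Hn (ex_intro _ _ Hs)). auto.
Qed.

Lemma lp_single p c : Rbar_le 1 p -> 0 <= c ->
  lp_mem p (fun n => match n with O => c | S _ => 0 end) /\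
  lp_norm p (fun n => match n with O => c | S _ => 0 end) <= c.
Proof.
  intros Hp Hc. destruct (p_cases p Hp) as [[p0 [-> Hp0]]| ->].
  - simpl in *.
    assert (Hex : ex_series (fun i => pw (match i with O => c | S _ => 0 end) p0)).
    { apply ex_series_incr_1. simpl. eapply ex_series_ext. 2: apply ex_series_0'. intros; rewrite pw_0; auto. }
    split; auto. rewrite Series_incr_1 by auto. simpl.
    rewrite (Series_ext _ (fun _ => 0)) by (intros; apply pw_0). rewrite Series_0', Rplus_0_r.
    rewrite pw_pw by lra. lra.
  - assert (Hs : forall i, (fun n => match n with O => c | S _ => 0 end) i <= c).
    { intros [|i]; simpl; lra. }
    assert (Hn : forall i, 0 <= (fun n => match n with O => c | S _ => 0 end) i). { intros [|i]; simpl; lra. }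
    split. simpl; eauto. apply (sup_facts _ Hn (ex_intro _ _ Hs)). auto.
Qed.


Fixpoint wconv (r : R) (a : nat -> R) (n : nat) : R :=
  match n with O => a O | S k => r * wconv r a k + a (S k) end.

Lemma wconv_nonneg r a n : 0 <= r -> (forall i, 0 <= a i) -> 0 <= wconv r a n.
Proof. intros Hr Ha. induction n; simpl. auto. specialize (Ha (S n)). nra. Qed.

Lemma conv_pt p0 r w x : 1 <= p0 -> 0 <= r < 1 -> 0 <= w -> 0 <= x ->
  pw (r * w + x) p0 <= pw ((1 + r)/2) p0 * pw w p0 + pw (r / ((1-r)/2) + 1) p0 * pw x p0.
Proof.
  intros Hp Hr Hw Hx. set (d := (1-r)/2).
  assert (Hd : 0 < d) by (unfold d; lra).
  pose proof (pw_nonneg ((1 + r)/2) p0). pose proof (pw_nonneg w p0).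
  pose proof (pw_nonneg (r / d + 1) p0). pose proof (pw_nonneg x p0).
  destruct (Rle_dec x (d * w)).
  - assert (pw (r * w + x) p0 <= pw ((1 + r)/2) p0 * pw w p0).
    { rewrite <- pw_mult by lra. apply pw_le. lra. split. nra. unfold d in r0. nra. }
    nra.
  - assert (pw (r * w + x) p0 <= pw (r / d + 1) p0 * pw x p0).
    { rewrite <- pw_mult. apply pw_le. lra. split. nra.
      assert (r * w <= r / d * x). { unfold Rdiv. assert (w <= x / d). { apply Rmult_le_reg_r with d; auto.
        unfold Rdiv. rewrite Rmult_assoc, Rinv_l by lra. lra. }
        unfold Rdiv in H3. rewrite Rmult_assoc. apply Rmult_le_compat_l; lra. }
      lra. apply Rplus_le_le_0_compat. apply Rmult_le_pos. lra. left; apply Rinv_0_lt_compat; auto. lra. auto. }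
    nra.
Qed.

Lemma lp_conv p r : Rbar_le 1 p -> 0 <= r < 1 ->
  exists K, 0 <= K /\ forall a, (forall i, 0 <= a i) -> lp_mem p a ->
    lp_mem p (wconv r a) /\ lp_norm p (wconv r a) <= K * lp_norm p a.
Proof.
  intros Hp Hr. destruct (p_cases p Hp) as [[p0 [-> Hp0]]| ->].
  - set (rho := pw ((1 + r)/2) p0). set (c := pw (r / ((1-r)/2) + 1) p0).
    assert (Hrho : rho < 1) by (apply pw_lt1; lra).
    assert (Hrho0 : 0 <= rho) by apply pw_nonneg.
    assert (Hc : 0 <= c) by apply pw_nonneg.
    assert (Hc1 : 1 <= c).
    { apply pw_ge1. lra. assert (0 <= r / ((1 - r) / 2)). { apply Rmult_le_pos. lra. left; apply Rinv_0_lt_compat; lra. } lra. }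
    exists (pw (c / (1 - rho)) (/p0)). split. apply pw_nonneg.
    intros a Ha Hm. simpl in *.
    set (Sa := Series (fun i => pw (a i) p0)).
    assert (HSa : 0 <= Sa) by (apply Series_nonneg; auto; intros; apply pw_nonneg).
    assert (Hind : forall N, (1 - rho) * sum_n (fun n => pw (wconv r a n) p0) N + rho * pw (wconv r a N) p0
                              <= c * sum_n (fun n => pw (a n) p0) N).
    { induction N.
      - rewrite !sum_O. simpl. pose proof (pw_nonneg (a 0%nat) p0). nra.
      - rewrite !sum_Sn. unfold plus; simpl.
        pose proof (conv_pt p0 r (wconv r a N) (a (S N)) Hp0 Hr (wconv_nonneg r a N (proj1 Hr) Ha) (Ha (S N))).
        fold rho c in H. pose proof (pw_nonneg (r * wconv r a N + a (S N)) p0). nra. }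
    assert (Hb : forall N, sum_n (fun n => pw (wconv r a n) p0) N <= c / (1 - rho) * Sa).
    { intros N. specialize (Hind N). pose proof (sum_n_le_series (fun n => pw (a n) p0) N (fun n => pw_nonneg _ _) Hm).
      fold Sa in H. pose proof (pw_nonneg (wconv r a N) p0).
      apply Rmult_le_reg_l with (1 - rho). lra.
      replace ((1 - rho) * (c / (1 - rho) * Sa)) with (c * Sa) by (field; lra).
      assert (c * sum_n (fun n => pw (a n) p0) N <= c * Sa) by (apply Rmult_le_compat_l; lra).
      assert (0 <= rho * pw (wconv r a N) p0) by (apply Rmult_le_pos; lra). lra. }
    destruct (series_bounded _ _ (fun n => pw_nonneg _ _) Hb) as [Hex HS].
    split; auto.
    rewrite <- pw_mult. apply pw_le. apply Rinv_0_lt_compat; lra. split; auto.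
    apply Series_nonneg; auto; intros; apply pw_nonneg.
    apply Rmult_le_pos; auto. left; apply Rinv_0_lt_compat; lra. auto.
  - exists (/ (1 - r)). split. left; apply Rinv_0_lt_compat; lra.
    intros a Ha Hm. simpl in Hm. destruct (sup_facts a Ha Hm) as [A1 A2].
    pose proof (lp_norm_nonneg p_infty a ltac:(simpl; auto) Ha Hm) as Hn.
    assert (Hw : forall n, wconv r a n <= / (1 - r) * lp_norm p_infty a).
    { assert (1 <= / (1 - r)). { rewrite <- Rinv_1. apply Rinv_le_contravar; lra. }
      induction n; cbn [wconv]. eapply Rle_trans. apply A1. nra.
      specialize (A1 (S n)).
      replace (/ (1 - r) * lp_norm p_infty a) with (r * (/ (1 - r) * lp_norm p_infty a) + lp_norm p_infty a)
        by (field; lra). nra. }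
    split. simpl; eauto.
    apply (sup_facts _ (fun n => wconv_nonneg r a n (proj1 Hr) Ha) (ex_intro _ _ Hw)). auto.
Qed.

Lemma conj_cases p q : Rbar_le 1 p -> Rbar_le 1 q -> Rbar_plus (Rbar_inv p) (Rbar_inv q) = Finite 1 ->
  (exists p0 q0, p = Finite p0 /\ q = Finite q0 /\ 1 < p0 /\ 1 < q0 /\ /p0 + /q0 = 1) \/
  (p = Finite 1 /\ q = p_infty) \/ (p = p_infty /\ q = Finite 1).
Proof.
  intros Hp Hq H. destruct p as [p0| |]; destruct q as [q0| |]; simpl in *; try contradiction;
    injection H; intros E.
  - left. exists p0, q0. repeat split; auto.
    + destruct (Req_dec p0 1). subst. rewrite Rinv_1 in E. assert (0 < /q0) by (apply Rinv_0_lt_compat; lra). lra. lra.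
    + destruct (Req_dec q0 1). subst. rewrite Rinv_1 in E. assert (0 < /p0) by (apply Rinv_0_lt_compat; lra). lra. lra.
  - right; left. split; auto. f_equal. rewrite Rplus_0_r in E. rewrite <- (Rinv_inv p0), E. apply Rinv_1.
  - right; right. split; auto. f_equal. rewrite Rplus_0_l in E. rewrite <- (Rinv_inv q0), E. apply Rinv_1.
  - lra.
Qed.

Lemma young_half x y p0 q0 : 0 < x -> 0 < y -> 0 < q0 -> Rpower x q0 <= Rpower y p0 ->
  p0 * / q0 = p0 - 1 -> x * y <= Rpower y p0.
Proof.
  intros Hx Hy Hq H E.
  assert (Hx' : x <= Rpower y (p0 * /q0)).
  { rewrite <- (Rpower_1 x) by auto. rewrite <- (Rinv_r q0) by lra.
    rewrite <- Rpower_mult, <- (Rpower_mult y). apply Rle_Rpower_l.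
    left; apply Rinv_0_lt_compat; auto. split; auto. unfold Rpower; apply exp_pos. }
  rewrite E in Hx'.
  replace (Rpower y p0) with (Rpower y (p0 - 1) * Rpower y 1).
  rewrite Rpower_1 by auto. apply Rmult_le_compat_r; lra.
  rewrite <- Rpower_plus. f_equal. ring.
Qed.

Lemma young x y p0 q0 : 1 < p0 -> 1 < q0 -> /p0 + /q0 = 1 -> 0 <= x -> 0 <= y ->
  x * y <= pw x q0 + pw y p0.
Proof.
  intros Hp Hq E Hx Hy. pose proof (pw_nonneg x q0). pose proof (pw_nonneg y p0).
  destruct (Req_dec x 0) as [->|]. nra. destruct (Req_dec y 0) as [->|]. nra.
  rewrite !pw_pos by lra.
  assert (E1 : p0 * / q0 = p0 - 1). { replace (/q0) with (1 - /p0) by lra. field. lra. }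
  assert (E2 : q0 * / p0 = q0 - 1). { replace (/p0) with (1 - /q0) by lra. field. lra. }
  assert (0 < Rpower x q0) by (unfold Rpower; apply exp_pos).
  assert (0 < Rpower y p0) by (unfold Rpower; apply exp_pos).
  destruct (Rle_dec (Rpower x q0) (Rpower y p0)).
  - pose proof (young_half x y p0 q0 ltac:(lra) ltac:(lra) ltac:(lra) r E1). lra.
  - assert (Rpower y p0 <= Rpower x q0) by lra.
    pose proof (young_half y x q0 p0 ltac:(lra) ltac:(lra) ltac:(lra) H5 E2). lra.
Qed.

Lemma holder p q a : Rbar_le 1 p -> Rbar_le 1 q -> Rbar_plus (Rbar_inv p) (Rbar_inv q) = Finite 1 ->
  (forall i, 0 <= a i) -> lp_mem q a ->
  exists C, 0 <= C /\ forall b, (forall i, 0 <= b i) -> lp_mem p b ->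
    ex_series (fun i => a i * b i) /\ Series (fun i => a i * b i) <= C * lp_norm p b.
Proof.
  intros Hp Hq Hpq Ha Hma.
  destruct (conj_cases p q Hp Hq Hpq) as [[p0 [q0 [-> [-> [Hp0 [Hq0 E]]]]]] | [[-> ->]|[-> ->]]].
  - simpl in Hma. set (Sa := Series (fun i => pw (a i) q0)).
    assert (HSa : 0 <= Sa) by (apply Series_nonneg; auto; intros; apply pw_nonneg).
    exists (Sa + 1). split. lra.
    intros b Hb Hmb. simpl in *. set (S := Series (fun i => pw (b i) p0)).
    assert (HS : 0 <= S) by (apply Series_nonneg; auto; intros; apply pw_nonneg).
    destruct (Req_dec S 0) as [HS0|HS0].
    + assert (Hb0 : forall i, b i = 0).
      { intros i. apply (pw_eq0 _ p0). auto. apply (Series_zero_inv (fun i => pw (b i) p0)); auto. intros; apply pw_nonneg. }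
      assert (E0 : forall i, a i * b i = 0) by (intros; rewrite Hb0; ring).
      split. eapply ex_series_ext. 2: apply ex_series_0'. intros; rewrite E0; auto.
      rewrite (Series_ext _ (fun _ => 0)) by auto. rewrite Series_0'.
      apply Rmult_le_pos. lra. apply pw_nonneg.
    + set (N := pw S (/p0)).
      assert (HN : 0 < N). { unfold N. rewrite pw_pos by lra. unfold Rpower; apply exp_pos. }
      assert (HNS : pw N p0 = S). { unfold N. apply pw_pw'; lra. }
      assert (Hpt : forall i, 0 <= a i * b i <= N * pw (a i) q0 + (N / S) * pw (b i) p0).
      { intros i. split. apply Rmult_le_pos; auto.
        pose proof (young (a i) (b i / N) p0 q0 Hp0 Hq0 E (Ha i)) as Y.
        assert (0 <= b i / N). { apply Rmult_le_pos; auto. left; apply Rinv_0_lt_compat; auto. }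
        specialize (Y H).
        assert (Hpb : pw (b i) p0 = pw (b i / N) p0 * S).
        { rewrite <- HNS, <- pw_mult by lra. f_equal. field. lra. }
        rewrite Hpb. replace (a i * b i) with (N * (a i * (b i / N))) by (field; lra).
        replace (N / S * (pw (b i / N) p0 * S)) with (N * pw (b i / N) p0) by (field; lra).
        nra. }
      assert (Hex : ex_series (fun i => N * pw (a i) q0 + N / S * pw (b i) p0)).
      { apply ex_series_plusR; apply ex_series_scalR; auto. }
      split. apply (ex_series_leR _ _ Hpt Hex).
      eapply Rle_trans. apply (Series_le _ _ Hpt Hex).
      rewrite Series_plus by (apply ex_series_scalR; auto). rewrite !Series_scal_l. fold Sa S.
      fold N. replace (N / S * S) with N by (field; lra). nra.
  - simpl in Hma. destruct (sup_facts a Ha Hma) as [A1 A2].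
    pose proof (lp_norm_nonneg p_infty a ltac:(simpl; auto) Ha Hma).
    exists (lp_norm p_infty a). split; auto. intros b Hb Hmb. simpl in Hmb.
    change (lp_norm (Finite 1) b) with (pw (Series (fun i => pw (b i) 1)) (/1)).
    assert (Eb : forall i, pw (b i) 1 = b i) by (intros; apply pw_1; auto).
    assert (Hmb' : ex_series b) by (apply (ex_series_ext _ _ Eb Hmb)).
    assert (Hpt : forall i, 0 <= a i * b i <= lp_norm p_infty a * b i).
    { intros i. split. apply Rmult_le_pos; auto. apply Rmult_le_compat_r; auto. }
    split. apply (ex_series_leR _ _ Hpt). apply ex_series_scalR; auto.
    rewrite Rinv_1. rewrite (Series_ext (fun i => pw (b i) 1) b Eb).
    rewrite pw_1 by (apply Series_nonneg; auto).
    rewrite <- Series_scal_l. apply Series_le; auto. apply ex_series_scalR; auto.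
  - simpl in Hma.
    assert (Ea : forall i, pw (a i) 1 = a i) by (intros; apply pw_1; auto).
    assert (Hma' : ex_series a) by (apply (ex_series_ext _ _ Ea Hma)).
    exists (Series a). split. apply Series_nonneg; auto.
    intros b Hb Hmb. simpl in Hmb. destruct (sup_facts b Hb Hmb) as [B1 B2].
    assert (Hpt : forall i, 0 <= a i * b i <= lp_norm p_infty b * a i).
    { intros i. split. apply Rmult_le_pos; auto. rewrite Rmult_comm. apply Rmult_le_compat_r; auto. }
    split. apply (ex_series_leR _ _ Hpt). apply ex_series_scalR; auto.
    eapply Rle_trans. apply (Series_le _ _ Hpt). apply ex_series_scalR; auto.
    rewrite Series_scal_l. lra.
Qed.


Definition Cser (f : nat -> R) (x : nat -> C) : C :=
  (Series (fun i => f i * fst (x i)), Series (fun i => f i * snd (x i))).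

Definition holderF p (f : nat -> R) := exists C, 0 <= C /\ forall b, (forall i, 0 <= b i) -> lp_mem p b ->
    ex_series (fun i => f i * b i) /\ Series (fun i => f i * b i) <= C * lp_norm p b.

Lemma fst_le_Cmod z : Rabs (fst z) <= Cmod z.
Proof. eapply Rle_trans. 2: apply Rmax_Cmod. apply Rmax_l. Qed.
Lemma snd_le_Cmod z : Rabs (snd z) <= Cmod z.
Proof. eapply Rle_trans. 2: apply Rmax_Cmod. apply Rmax_r. Qed.

Section Ser.
Variable p : Rbar.
Variable f : nat -> R.
Hypothesis Hp : Rbar_le 1 p.
Hypothesis Hf0 : forall i, 0 <= f i.
Hypothesis HF : holderF p f.

Lemma Cser_ex x : in_lpC p x ->
  ex_series (fun i => f i * Cmod (x i)) /\ ex_series (fun i => f i * fst (x i)) /\ ex_series (fun i => f i * snd (x i)).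
Proof.
  intros Hx. destruct HF as [C [HC H]]. destruct (H _ (fun i => Cmod_ge_0 _) Hx) as [Hex _].
  split; auto. split; apply ex_series_Rabs; apply (ex_series_leR _ (fun i => f i * Cmod (x i))); auto; intros i; split; try apply Rabs_pos;
    rewrite Rabs_mult, (Rabs_pos_eq (f i)) by auto; apply Rmult_le_compat_l; auto.
  apply fst_le_Cmod. apply snd_le_Cmod.
Qed.

Lemma Series_lin4 (u1 u2 u3 u4 : nat -> R) c1 c2 c3 c4 :
  ex_series u1 -> ex_series u2 -> ex_series u3 -> ex_series u4 ->
  Series (fun i => c1 * u1 i + c2 * u2 i + c3 * u3 i + c4 * u4 i) =
  c1 * Series u1 + c2 * Series u2 + c3 * Series u3 + c4 * Series u4.
Proof.
  intros H1 H2 H3 H4.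
  rewrite Series_plus. rewrite Series_plus. rewrite Series_plus.
  rewrite !Series_scal_l. auto.
  all: repeat apply ex_series_plusR; apply ex_series_scalR; auto.
Qed.

Lemma Cser_lin x y a b : in_lpC p x -> in_lpC p y ->
  Cser f (fun n => (a * x n + b * y n)%C) = (a * Cser f x + b * Cser f y)%C.
Proof.
  intros Hx Hy. destruct (Cser_ex x Hx) as [_ [X1 X2]]. destruct (Cser_ex y Hy) as [_ [Y1 Y2]].
  unfold Cser. destruct a as [a1 a2]. destruct b as [b1 b2].
  apply injective_projections; simpl.
  - rewrite (Series_ext _ (fun i => a1 * (f i * fst (x i)) + (- a2) * (f i * snd (x i)) + b1 * (f i * fst (y i)) + (- b2) * (f i * snd (y i)))) by (intros; simpl; ring).
    rewrite Series_lin4 by auto. ring.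
  - rewrite (Series_ext _ (fun i => a1 * (f i * snd (x i)) + a2 * (f i * fst (x i)) + b1 * (f i * snd (y i)) + b2 * (f i * fst (y i)))) by (intros; simpl; ring).
    rewrite Series_lin4 by auto. ring.
Qed.

Lemma cs2 u1 u2 a b : u1 * u1 + u2 * u2 = 1 -> u1 * a + u2 * b <= Cmod (a, b).
Proof.
  intros H. unfold Cmod; cbn [fst snd]. destruct (Rle_dec (u1 * a + u2 * b) 0).
  - pose proof (sqrt_pos (a ^ 2 + b ^ 2)). lra.
  - rewrite <- (sqrt_pow2 (u1 * a + u2 * b)) by lra. apply sqrt_le_1_alt.
    assert (0 <= (u1 * b - u2 * a) ^ 2) by (apply pow2_ge_0).
    assert (Eq : (u1*a+u2*b)^2 + (u1*b-u2*a)^2 = (u1*u1+u2*u2)*(a^2+b^2)) by ring.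
    rewrite H in Eq. lra.
Qed.

Lemma Cser_norm x : in_lpC p x -> Cmod (Cser f x) <= Series (fun i => f i * Cmod (x i)).
Proof.
  intros Hx. destruct (Cser_ex x Hx) as [XM [X1 X2]].
  assert (HS : 0 <= Series (fun i => f i * Cmod (x i))).
  { apply Series_nonneg; auto. intros; apply Rmult_le_pos; auto; apply Cmod_ge_0. }
  set (w := Cser f x). destruct (Req_dec (Cmod w) 0) as [H0|H0]. lra.
  assert (Hm : 0 < Cmod w) by (pose proof (Cmod_ge_0 w); lra).
  set (m := Cmod w). set (u1 := fst w / m). set (u2 := snd w / m).
  assert (Hmm : m * m = fst w ^ 2 + snd w ^ 2).
  { unfold m, Cmod. rewrite sqrt_sqrt. auto. pose proof (pow2_ge_0 (fst w)); pose proof (pow2_ge_0 (snd w)); lra. }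
  assert (Hm2 : 0 < m) by exact Hm. assert (Hmd : m <> 0) by lra.
  assert (Hu : u1 * u1 + u2 * u2 = 1). { unfold u1, u2. replace (fst w / m * (fst w / m) + snd w / m * (snd w / m)) with ((fst w ^2 + snd w^2) / (m*m)) by (field; auto).
    rewrite <- Hmm. field. auto. }
  assert (E : Series (fun i => u1 * (f i * fst (x i)) + u2 * (f i * snd (x i))) = m).
  { rewrite Series_plus by (apply ex_series_scalR; auto). rewrite !Series_scal_l.
    fold (fst w). unfold u1, u2. replace (Series (fun i => f i * fst (x i))) with (fst w) by auto.
    replace (Series (fun i => f i * snd (x i))) with (snd w) by auto.
    apply Rmult_eq_reg_r with m. 2: lra. rewrite Hmm. field. lra. }
  assert (Hex1: ex_series (fun i => u1 * (f i * fst (x i)) + u2 * (f i * snd (x i)))) by (apply ex_series_plusR; apply ex_series_scalR; auto).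
  assert (Hexd: ex_series (fun i => f i * Cmod (x i) - (u1 * (f i * fst (x i)) + u2 * (f i * snd (x i))))).
  { apply (ex_series_ext (fun i => f i * Cmod (x i) + (-1) * (u1 * (f i * fst (x i)) + u2 * (f i * snd (x i))))).
    intros n. change (f n * Cmod (x n) + -1 * (u1 * (f n * fst (x n)) + u2 * (f n * snd (x n))) =
  f n * Cmod (x n) - (u1 * (f n * fst (x n)) + u2 * (f n * snd (x n)))). ring.
    apply ex_series_plusR; auto. apply ex_series_scalR; auto. }
  assert (Hd : 0 <= Series (fun i => f i * Cmod (x i) - (u1 * (f i * fst (x i)) + u2 * (f i * snd (x i))))).
  { apply Series_nonneg; auto. intros i. pose proof (cs2 u1 u2 (fst (x i)) (snd (x i)) Hu).
    rewrite <- surjective_pairing in H. pose proof (Hf0 i). nra. }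
  rewrite Series_minus in Hd by auto. lra.
Qed.

Lemma Cser_bound : exists C, 0 <= C /\ forall x, in_lpC p x -> Cmod (Cser f x) <= C * lp_norm p (fun i => Cmod (x i)).
Proof.
  destruct HF as [C [HC H]]. exists C. split; auto. intros x Hx.
  eapply Rle_trans. apply Cser_norm; auto. apply (H _ (fun i => Cmod_ge_0 _) Hx).
Qed.

Lemma Cser_zero : Cser f (fun _ => RtoC 0) = RtoC 0.
Proof. unfold Cser; simpl. rewrite !(Series_ext _ (fun _ => 0)) by (intros; ring). rewrite Series_0'. auto. Qed.

End Ser.

Lemma lpC_lin p x y a b : Rbar_le 1 p -> in_lpC p x -> in_lpC p y ->
  in_lpC p (fun n => (a * x n + b * y n)%C) /\
  lp_norm p (fun n => Cmod (a * x n + b * y n)%C) <=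
    4 * (Cmod a * lp_norm p (fun n => Cmod (x n)) + Cmod b * lp_norm p (fun n => Cmod (y n))).
Proof.
  intros Hp Hx Hy. apply (lp_comb p _ (fun n => Cmod (x n)) (fun n => Cmod (y n)) (Cmod a) (Cmod b)); auto using Cmod_ge_0.
  intros i. split. apply Cmod_ge_0. eapply Rle_trans. apply Cmod_triangle. rewrite !Cmod_mult. lra.
Qed.

Definition e0 : nat -> C := fun n => match n with O => RtoC 1 | S _ => RtoC 0 end.

Lemma e0_lp p : Rbar_le 1 p -> in_lpC p e0.
Proof.
  intros Hp. destruct (lp_single p 1 Hp ltac:(lra)) as [H _]. unfold in_lpC.
  replace (fun i => Cmod (e0 i)) with (fun n : nat => match n with O => 1 | S _ => 0 end). auto.
  apply functional_extensionality. intros [|n]; simpl; unfold e0; rewrite Cmod_R, ?Rabs_R1, ?Rabs_R0; auto.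
Qed.

Lemma zero_lp p : Rbar_le 1 p -> in_lpC p (fun _ => RtoC 0).
Proof.
  intros Hp. destruct (lp_mono p (fun i => Cmod (RtoC 0)) (fun i => Cmod (e0 i)) 0 Hp ltac:(lra) (fun i => Cmod_ge_0 _)) as [H _].
  intros i. rewrite Cmod_0. lra. apply e0_lp; auto. auto.
Qed.


Fixpoint Rres (t : nat -> R) (lam : C) (x : nat -> C) (n : nat) : C :=
  match n with
  | O => (x O / lam)%C
  | S k => ((x (S k) + RtoC (t k) * Rres t lam x k) / lam)%C
  end.

Lemma Rres_left t lam x n : lam <> RtoC 0 -> (lam * Rres t lam x n - TC t (Rres t lam x) n)%C = x n.
Proof. intros H. destruct n; simpl; field; auto. Qed.

Lemma Rres_right t lam y n : lam <> RtoC 0 -> Rres t lam (fun j => lam * y j - TC t y j)%C n = y n.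
Proof. intros H. induction n; simpl. field; auto. rewrite IHn. field; auto. Qed.

Lemma Rres_lin t lam x y a b n : lam <> RtoC 0 ->
  Rres t lam (fun j => a * x j + b * y j)%C n = (a * Rres t lam x n + b * Rres t lam y n)%C.
Proof. intros H. induction n; simpl. field; auto. rewrite IHn. field; auto. Qed.

Lemma TC_lin t x y a b n : TC t (fun j => a * x j + b * y j)%C n = (a * TC t x n + b * TC t y n)%C.
Proof. destruct n; simpl; ring. Qed.

Lemma Rres_bounded p t lam th N : Rbar_le 1 p -> 0 < th < 1 -> (forall n, 0 <= t n <= 1) ->
  (forall n, (N <= n)%nat -> t n <= th) -> th < Cmod lam -> bounded_on Cmod p (Rres t lam).
Proof.
  intros Hp Hth Ht HN Hl. set (L := Cmod lam).
  assert (HlL : th < L) by exact Hl. assert (HL : 0 < L) by lra.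
  assert (Hlam : lam <> RtoC 0). { intros E. unfold L in HL. rewrite E, Cmod_0 in HL. lra. }
  set (r := th / L).
  assert (Hr : 0 <= r < 1). { unfold r. split. apply Rmult_le_pos; [lra| left; apply Rinv_0_lt_compat; auto].
    apply Rmult_lt_reg_r with L; auto. unfold Rdiv. rewrite Rmult_assoc, Rinv_l by lra. lra. }
  destruct (lp_conv p r Hp Hr) as [K [HK HKc]].
  assert (Hith : 1 <= / th). { rewrite <- Rinv_1. apply Rinv_le_contravar; lra. }
  assert (Claim : forall x n, Cmod (Rres t lam x n) <= / L * (/ th) ^ (Nat.min n N) * wconv r (fun i => Cmod (x i)) n).
  { intros x n. induction n.
    - simpl. rewrite Cmod_div by auto. fold L. right. field. lra.
    - cbn [Rres wconv]. rewrite Cmod_div by auto. fold L.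
      pose proof (wconv_nonneg r (fun i => Cmod (x i)) n (proj1 Hr) (fun i => Cmod_ge_0 _)) as Hw.
      set (w := wconv r (fun i => Cmod (x i)) n) in *.
      set (Q := (/ th) ^ Nat.min n N) in *. set (Q' := (/th) ^ Nat.min (S n) N).
      assert (HQ1 : 1 <= Q') by (apply pow_R1_Rle; auto).
      assert (HQ0 : 0 <= Q) by (apply pow_le; lra).
      assert (HQQ : t n * Q <= th * Q').
      { destruct (Nat.lt_ge_cases n N).
        - unfold Q', Q. replace (Nat.min (S n) N) with (S (Nat.min n N)) by lia. simpl.
          replace (th * (/ th * (/ th) ^ Nat.min n N)) with ((/ th) ^ Nat.min n N) by (field; lra).
          pose proof (Ht n). pose proof (pow_le (/th) (Nat.min n N) ltac:(lra)). nra.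
        - unfold Q', Q. replace (Nat.min (S n) N) with N by lia. replace (Nat.min n N) with N by lia.
          pose proof (HN n H). pose proof (pow_le (/th) N ltac:(lra)). nra. }
      assert (Htr : Cmod (x (S n) + RtoC (t n) * Rres t lam x n) <= Cmod (x (S n)) + t n * Cmod (Rres t lam x n)).
      { eapply Rle_trans. apply Cmod_triangle. rewrite Cmod_mult, Cmod_R, Rabs_pos_eq by (apply Ht). lra. }
      assert (Hx0 := Cmod_ge_0 (x (S n))).
      assert (H1 : t n * Cmod (Rres t lam x n) <= t n * (/ L * Q * w)) by (apply Rmult_le_compat_l; [apply Ht | auto]).
      assert (H2 : t n * (/ L * Q * w) <= Q' * (r * w)).
      { unfold r. replace (t n * (/ L * Q * w)) with ((t n * Q) * (w / L)) by (field; lra).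
        replace (Q' * (th / L * w)) with ((th * Q') * (w / L)) by (field; lra).
        apply Rmult_le_compat_r. apply Rmult_le_pos; [lra| left; apply Rinv_0_lt_compat; auto]. auto. }
      assert (H3 : Cmod (x (S n)) <= Q' * Cmod (x (S n))) by nra.
      unfold Rdiv. replace (/ L * Q' * (r * w + Cmod (x (S n)))) with ((Q' * (r * w) + Q' * Cmod (x (S n))) * / L) by ring.
      apply Rmult_le_compat_r. left; apply Rinv_0_lt_compat; auto. lra. }
  set (D := / L * (/ th) ^ N).
  assert (HD : 0 <= D). { unfold D. apply Rmult_le_pos. left; apply Rinv_0_lt_compat; auto. apply pow_le; lra. }
  assert (Claim2 : forall x n, 0 <= Cmod (Rres t lam x n) <= D * wconv r (fun i => Cmod (x i)) n).
  { intros x n. split. apply Cmod_ge_0. eapply Rle_trans. apply Claim. unfold D.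
    apply Rmult_le_compat_r. apply wconv_nonneg; [lra| intros; apply Cmod_ge_0].
    apply Rmult_le_compat_l. left; apply Rinv_0_lt_compat; auto. apply Rle_pow; auto. lia. }
  split.
  - intros x Hx. destruct (HKc _ (fun i => Cmod_ge_0 _) Hx) as [Hm _].
    apply (lp_mono p _ _ D Hp HD (fun n => wconv_nonneg r _ n (proj1 Hr) (fun i => Cmod_ge_0 _)) (Claim2 x) Hm).
  - exists (D * K). intros x Hx. destruct (HKc _ (fun i => Cmod_ge_0 _) Hx) as [Hm Hn].
    destruct (lp_mono p _ _ D Hp HD (fun n => wconv_nonneg r _ n (proj1 Hr) (fun i => Cmod_ge_0 _)) (Claim2 x) Hm) as [_ H].
    eapply Rle_trans. apply H. rewrite Rmult_assoc. apply Rmult_le_compat_l; auto.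
Qed.


Lemma eig_spec p Aop lam v k : Rbar_le 1 p -> in_lpC p v -> v k <> RtoC 0 ->
  (forall n, (lam * v n - Aop v n)%C = RtoC 0) -> (forall n, Aop (fun _ => RtoC 0) n = RtoC 0) ->
  in_spectrum p Aop lam.
Proof.
  intros Hp Hv Hk Hev H0 [S [Hb HS]].
  destruct (HS v Hv) as [H1 _]. destruct (HS _ (zero_lp p Hp)) as [H2 _].
  assert (E1 : (fun j => Cminus (Cmult lam (v j)) (Aop v j)) = (fun _ => RtoC 0)).
  { apply functional_extensionality; intros; apply Hev. }
  assert (E2 : (fun j => Cminus (Cmult lam (RtoC 0)) (Aop (fun _ => RtoC 0) j)) = (fun _ => RtoC 0)).
  { apply functional_extensionality; intros j. rewrite H0. ring. }
  specialize (H1 k). specialize (H2 k). rewrite E1 in H1. rewrite E2 in H2. congruence.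
Qed.

Lemma rank1_not_spec p (Aop Bop Rop : (nat -> C) -> (nat -> C)) (phi : (nat -> C) -> C) (lam : C) :
  Rbar_le 1 p ->
  (forall x n, Aop x n = (Bop x n + phi x * e0 n)%C) ->
  (forall x y a b n, Bop (fun j => a * x j + b * y j)%C n = (a * Bop x n + b * Bop y n)%C) ->
  (forall x, in_lpC p x -> in_lpC p (Bop x)) ->
  (forall x y a b n, Rop (fun j => a * x j + b * y j)%C n = (a * Rop x n + b * Rop y n)%C) ->
  (forall x n, (lam * Rop x n - Bop (Rop x) n)%C = x n) ->
  (forall y n, Rop (fun j => lam * y j - Bop y j)%C n = y n) ->
  bounded_on Cmod p Rop ->
  (forall x y a b, in_lpC p x -> in_lpC p y -> phi (fun j => a * x j + b * y j)%C = (a * phi x + b * phi y)%C) ->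
  (exists C, 0 <= C /\ forall x, in_lpC p x -> Cmod (phi x) <= C * lp_norm p (fun i => Cmod (x i))) ->
  phi (Rop e0) <> RtoC 1 ->
  ~ in_spectrum p Aop lam.
Proof.
  intros Hp HA HBl HBm HRlin HRl HRr [HRm [M HM]] Hphil [C [HC Hphib]] Hg H. apply H.
  set (u := Rop e0). set (g := phi u).
  assert (Hg1 : (1 - g)%C <> RtoC 0). { intros E. apply Hg. fold u g. 
    replace g with (1 - (1 - g))%C by ring. rewrite E. ring. }
  assert (Hu : in_lpC p u) by (apply HRm; apply e0_lp; auto).
  set (S' := fun x n => (Rop x n + (phi (Rop x) / (1 - g)) * u n)%C).
  exists S'.
  assert (HSeq : forall x, S' x =
                           (fun n => (1 * Rop x n + (phi (Rop x) / (1 - g)) * u n)%C)).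
  { intros x. apply functional_extensionality; intros n. unfold S'. ring. }
  split.
  - split.
    + intros x Hx. rewrite HSeq; cbv beta. apply lpC_lin; auto. apply HRm; auto.
    + exists (4 * (M + C * M * lp_norm p (fun i => Cmod (u i)) / Cmod (1 - g))).
      intros x Hx. rewrite HSeq; cbv beta.
      assert (Hrx : in_lpC p (Rop x)) by (apply HRm; auto).
      destruct (lpC_lin p (Rop x) u 1 (phi (Rop x) / (1 - g)) Hp Hrx Hu) as [_ Hn].
      eapply Rle_trans. apply Hn.
      pose proof (HM x Hx) as HMx.
      pose proof (lp_norm_nonneg p _ Hp (fun i => Cmod_ge_0 (x i)) Hx) as Nx.
      pose proof (lp_norm_nonneg p _ Hp (fun i => Cmod_ge_0 (u i)) Hu) as Nu.
      pose proof (lp_norm_nonneg p _ Hp (fun i => Cmod_ge_0 (Rop x i)) Hrx) as Nrx.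
      assert (Hg0 : 0 < Cmod (1 - g)) by (apply Cmod_gt_0; auto).
      rewrite Cmod_1, Cmod_div by auto.
      assert (Hc : Cmod (phi (Rop x)) / Cmod (1 - g) <= C * M * lp_norm p (fun i => Cmod (x i)) / Cmod (1 - g)).
      { unfold Rdiv. apply Rmult_le_compat_r. left; apply Rinv_0_lt_compat; auto.
        eapply Rle_trans. apply Hphib; auto. rewrite Rmult_assoc. apply Rmult_le_compat_l; auto. }
      assert (Hc2 : Cmod (phi (Rop x)) / Cmod (1 - g) * lp_norm p (fun i => Cmod (u i)) <=
                    C * M * lp_norm p (fun i => Cmod (x i)) / Cmod (1 - g) * lp_norm p (fun i => Cmod (u i))).
      { apply Rmult_le_compat_r; auto. }
      replace (4 * (M + C * M * lp_norm p (fun i => Cmod (u i)) / Cmod (1 - g)) * lp_norm p (fun i => Cmod (x i)))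
        with (4 * (M * lp_norm p (fun i => Cmod (x i)) + C * M * lp_norm p (fun i => Cmod (x i)) / Cmod (1 - g) * lp_norm p (fun i => Cmod (u i))))
        by (field; lra).
      lra.
  - intros x Hx.
    assert (Hrx : in_lpC p (Rop x)) by (apply HRm; auto).
    assert (Hbx : in_lpC p (Bop x)) by auto.
    split.
    + intros i.
      set (z := fun j => Cminus (Cmult lam (x j)) (Aop x j)).
      assert (Ez : z = fun j => (1 * (lam * x j - Bop x j) + (- phi x) * e0 j)%C).
      { apply functional_extensionality; intros j. unfold z. rewrite HA. ring. }
      assert (Hz1 : in_lpC p (fun j => (lam * x j - Bop x j)%C)).
      { replace (fun j => (lam * x j - Bop x j)%C) with (fun j => (lam * x j + (-1) * Bop x j)%C).
        apply lpC_lin; auto. apply functional_extensionality; intros; ring. }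
      assert (ERz : Rop z = fun n => (1 * x n + (- phi x) * u n)%C).
      { apply functional_extensionality; intros n. rewrite Ez, HRlin, HRr. auto. }
      assert (Ephi : phi (Rop z) = (1 * phi x + (- phi x) * g)%C).
      { rewrite ERz. apply Hphil; auto. }
      unfold S'. rewrite Ephi, ERz. field. auto.
    + intros i.
      rewrite HSeq; cbv beta. rewrite HA, HBl, Hphil; auto.
      fold u g. set (c := (phi (Rop x) / (1 - g))%C).
      replace (lam * (1 * Rop x i + c * u i) - (1 * Bop (Rop x) i + c * Bop u i + (1 * phi (Rop x) + c * g) * e0 i))%C
        with ((lam * Rop x i - Bop (Rop x) i) + c * (lam * u i - Bop u i) - (phi (Rop x) + c * g) * e0 i)%C by ring.
      rewrite (HRl x i). unfold u. rewrite (HRl e0 i). fold u. unfold c. field. auto.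
Qed.



Lemma ex_series_extR (a b : nat -> R) : (forall n, a n = b n) -> ex_series a -> ex_series b.
Proof. intros H. apply ex_series_ext. auto. Qed.

Lemma spec_ub p Aop c : (forall l, in_spectrum p Aop l -> Cmod l <= c) -> Rbar_le (spec_rad p Aop) c.
Proof.
  intros H. unfold spec_rad. destruct (Lub_Rbar_correct (fun r => exists l, in_spectrum p Aop l /\ r = Cmod l)) as [_ Hl].
  apply Hl. intros x [l [Hs ->]]. simpl. auto.
Qed.

Lemma spec_lb p Aop l : in_spectrum p Aop l -> Rbar_le (Cmod l) (spec_rad p Aop).
Proof.
  intros H. unfold spec_rad. destruct (Lub_Rbar_correct (fun r => exists l, in_spectrum p Aop l /\ r = Cmod l)) as [Hub _].
  apply Hub. eauto.
Qed.

Lemma tprod_nonneg t n : (forall n, 0 <= t n <= 1) -> 0 <= tprod t n.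
Proof. intros Ht. induction n; simpl. lra. pose proof (Ht n). nra. Qed.

Lemma Cmod_RtoC_nonneg x : 0 <= x -> Cmod (RtoC x) = x.
Proof. intros. rewrite Cmod_R. apply Rabs_pos_eq; auto. Qed.

Lemma bounded_pos {V} (nm : V -> R) p A : Rbar_le 1 p -> (forall v, 0 <= nm v) -> bounded_on nm p A ->
  exists M, 0 <= M /\ forall x, lp_mem p (fun i => nm (x i)) -> lp_norm p (fun i => nm (A x i)) <= M * lp_norm p (fun i => nm (x i)).
Proof.
  intros Hp Hnm [_ [M HM]]. exists (Rmax M 0). split. apply Rmax_r.
  intros x Hx. eapply Rle_trans. apply HM; auto. apply Rmult_le_compat_r.
  apply lp_norm_nonneg; auto. apply Rmax_l.
Qed.



Lemma ivt_root (F : R -> R) x y : x <= y -> (forall z, x <= z <= y -> continuity_pt F z) ->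
  F x <= 0 -> 0 <= F y -> exists z, x <= z <= y /\ F z = 0.
Proof.
  intros Hxy Hc Hx Hy.
  destruct (Req_dec (F x) 0). exists x; split; auto; lra.
  destruct (Req_dec (F y) 0). exists y; split; auto; lra.
  destruct (Req_dec x y). subst. lra.
  destruct (Ranalysis5.IVT_interv F x y Hc ltac:(lra) ltac:(lra) ltac:(lra)) as [z Hz]. exists z; auto.
Qed.

Lemma pow_le1' z n : 0 <= z <= 1 -> z ^ n <= 1.
Proof. intros Hz. induction n; simpl. lra. pose proof (pow_le z n ltac:(lra)). nra. Qed.

Section A.
Variables (p : Rbar) (f t : nat -> R) (th : R) (N : nat).
Hypothesis Hp : Rbar_le 1 p.
Hypothesis Hf0 : forall i, 0 <= f i.
Hypothesis HF : holderF p f.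
Hypothesis Ht : forall n, 0 <= t n <= 1.
Hypothesis Hth : 0 < th < 1.
Hypothesis HN : forall n, (N <= n)%nat -> t n <= th.

Definition aa n := f n * tprod t n.
Definition G rho := Series (fun n => f n * (tprod t n / rho ^ (S n))).

Lemma aa_nonneg n : 0 <= aa n.
Proof. unfold aa. apply Rmult_le_pos; auto. apply tprod_nonneg; auto. Qed.

Lemma Rres_e0_real rho n : rho <> 0 -> Rres t (RtoC rho) e0 n = RtoC (tprod t n / rho ^ (S n)).
Proof.
  intros H. induction n.
  - simpl. unfold e0. apply injective_projections; simpl; field; auto.
  - cbn [Rres]. rewrite IHn. unfold e0. apply injective_projections; simpl; field; split; auto; apply pow_nonzero; auto.
Qed.

Lemma Rres_e0_Cmod lam n : lam <> RtoC 0 -> Cmod (Rres t lam e0 n) = tprod t n / Cmod lam ^ (S n).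
Proof.
  intros H. assert (HL : 0 < Cmod lam) by (apply Cmod_gt_0; auto). induction n.
  - simpl. rewrite Cmod_div by auto. unfold e0. rewrite Cmod_1. field. lra.
  - cbn [Rres]. rewrite Cmod_div by auto. unfold e0 at 1. rewrite Cplus_0_l, Cmod_mult, IHn, Cmod_RtoC_nonneg by apply Ht.
    cbn [tprod pow]. field. split. apply pow_nonzero; lra. lra.
Qed.

Lemma lp_geo rho : th < rho -> lp_mem p (fun n => tprod t n / rho ^ (S n)).
Proof.
  intros H. assert (Hr : rho <> 0) by lra.
  assert (HB : bounded_on Cmod p (Rres t (RtoC rho))).
  { apply (Rres_bounded p t (RtoC rho) th N); auto. rewrite Cmod_RtoC_nonneg; lra. }
  destruct HB as [Hm _]. specialize (Hm e0 (e0_lp p Hp)).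
  replace (fun n => tprod t n / rho ^ (S n)) with (fun n => Cmod (Rres t (RtoC rho) e0 n)). auto.
  apply functional_extensionality; intros n. rewrite Rres_e0_real by auto. apply Cmod_RtoC_nonneg.
  apply Rmult_le_pos. apply tprod_nonneg; auto. left; apply Rinv_0_lt_compat, pow_lt; lra.
Qed.

Lemma geo_nonneg rho n : 0 < rho -> 0 <= tprod t n / rho ^ (S n).
Proof. intros. apply Rmult_le_pos. apply tprod_nonneg; auto. left; apply Rinv_0_lt_compat, pow_lt; lra. Qed.

Lemma G_ex rho : th < rho -> ex_series (fun n => f n * (tprod t n / rho ^ (S n))).
Proof.
  intros H. destruct HF as [C [HC HH]]. apply (HH _ (fun n => geo_nonneg rho n ltac:(lra)) (lp_geo rho H)).
Qed.

Lemma A_decomp x n : AC f t x n = (TC t x n + Cser f x * e0 n)%C.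
Proof. unfold AC, FC, Cser, e0. destruct n; simpl; ring. Qed.

Lemma TC_lp x : in_lpC p x -> in_lpC p (TC t x).
Proof.
  intros Hx. destruct (lp_shift p _ Hp (fun i => Cmod_ge_0 (x i)) Hx) as [Hs _].
  destruct (lp_mono p (fun n => Cmod (TC t x n)) (shift (fun i => Cmod (x i))) 1 Hp ltac:(lra)) as [H _]; auto.
  intros [|i]; simpl; lra || apply Cmod_ge_0.
  intros [|i]; simpl. rewrite Cmod_0. lra. rewrite Cmod_mult, Cmod_RtoC_nonneg by apply Ht.
  split. apply Rmult_le_pos. apply Ht. apply Cmod_ge_0. pose proof (Ht i). pose proof (Cmod_ge_0 (x i)). nra.
Qed.

Lemma A_not_spec lam : th < Cmod lam -> Cser f (Rres t lam e0) <> RtoC 1 -> ~ in_spectrum p (AC f t) lam.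
Proof.
  intros Hl Hg. assert (Hlam : lam <> RtoC 0). { intros E. rewrite E, Cmod_0 in Hl. lra. }
  apply (rank1_not_spec p (AC f t) (TC t) (Rres t lam) (Cser f) lam Hp A_decomp).
  - apply TC_lin.
  - apply TC_lp.
  - intros. apply Rres_lin; auto.
  - intros. apply Rres_left; auto.
  - intros. apply Rres_right; auto.
  - apply (Rres_bounded p t lam th N); auto.
  - intros. apply (Cser_lin p); auto.
  - apply Cser_bound; auto.
  - auto.
Qed.

Lemma Cser_Rres_bound lam : th < Cmod lam -> Cmod (Cser f (Rres t lam e0)) <= G (Cmod lam).
Proof.
  intros Hl. assert (Hlam : lam <> RtoC 0). { intros E. rewrite E, Cmod_0 in Hl. lra. }
  assert (Hm : in_lpC p (Rres t lam e0)).
  { destruct (Rres_bounded p t lam th N Hp Hth Ht HN Hl) as [H _]. apply H. apply e0_lp; auto. }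
  eapply Rle_trans. apply (Cser_norm p); auto. unfold G. right. apply Series_ext. intros n.
  rewrite Rres_e0_Cmod; auto.
Qed.

Lemma A_ub c : th <= c -> (forall rho, c < rho -> G rho < 1) -> forall l, in_spectrum p (AC f t) l -> Cmod l <= c.
Proof.
  intros Hc HG l Hl. destruct (Rle_dec (Cmod l) c) as [H|H]; auto. exfalso.
  revert Hl. apply A_not_spec. lra. intros E.
  pose proof (Cser_Rres_bound l ltac:(lra)). rewrite E, Cmod_1 in H0. specialize (HG (Cmod l) ltac:(lra)). lra.
Qed.

Lemma A_eig rho : 0 < rho -> lp_mem p (fun n => tprod t n / rho ^ (S n)) ->
  G rho = 1 -> in_spectrum p (AC f t) (RtoC rho).
Proof.
  intros Hr Hm HG.
  set (v := fun n => RtoC (tprod t n / rho ^ (S n))).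
  assert (Hv : in_lpC p v).
  { unfold in_lpC. replace (fun i => Cmod (v i)) with (fun n => tprod t n / rho ^ (S n)). auto.
    apply functional_extensionality; intros n. unfold v. rewrite Cmod_RtoC_nonneg; auto. apply geo_nonneg; auto. }
  apply (eig_spec p _ _ v 0%nat Hp Hv).
  - intros E. assert (Hfst : fst (v 0%nat) = / rho) by (unfold v; simpl; field; lra).
    rewrite E in Hfst. simpl in Hfst. pose proof (Rinv_0_lt_compat rho Hr). lra.
  - intros n. rewrite A_decomp. unfold Cser.
    assert (E1 : Series (fun i => f i * fst (v i)) = 1). { rewrite <- HG. unfold G, v. apply Series_ext. intros; simpl; auto. }
    assert (E2 : Series (fun i => f i * snd (v i)) = 0).
    { unfold v; simpl. rewrite (Series_ext _ (fun _ => 0)) by (intros; ring). rewrite Series_0'. auto. }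
    rewrite E1, E2.
    destruct n; unfold v, e0; simpl; apply injective_projections; simpl; try field;
      repeat split; first [apply pow_nonzero; lra | lra].
  - intros n. destruct n; unfold AC, TC, FC; simpl.
    + rewrite !(Series_ext _ (fun _ => 0)) by (intros; simpl; ring). rewrite Series_0'. apply injective_projections; simpl; ring.
    + apply injective_projections; simpl; ring.
Qed.

Lemma G_PS rho : 0 < rho -> G rho = / rho * PSeries aa (/ rho).
Proof.
  intros Hr. unfold G, PSeries. rewrite <- Series_scal_l. apply Series_ext. intros n.
  unfold aa. rewrite pow_inv. cbn [pow]. field. split. apply pow_nonzero; lra. lra.
Qed.

Lemma ex_PS rho : th < rho -> ex_series (fun n => aa n * (/ rho) ^ n).
Proof.
  intros H. apply (ex_series_extR (fun n => rho * (f n * (tprod t n / rho ^ (S n))))).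
  intros n. unfold aa. rewrite pow_inv. cbn [pow]. field. split. apply pow_nonzero; lra. lra.
  apply ex_series_scalR. apply G_ex; auto.
Qed.

Lemma radius_lt z z' : 0 <= z -> z < z' -> ex_series (fun n => aa n * z' ^ n) -> Rbar_lt (Rabs z) (CV_radius aa).
Proof.
  intros Hz Hzz Hex. unfold CV_radius. destruct (Lub_Rbar_correct (CV_disk aa)) as [Hub _].
  assert (Hd : CV_disk aa z').
  { unfold CV_disk. apply (ex_series_ext _ _ (fun n => eq_sym (Rabs_pos_eq _ (Rmult_le_pos _ _ (aa_nonneg n) (pow_le z' n ltac:(lra)))))). auto. }
  specialize (Hub z' Hd). rewrite Rabs_pos_eq by auto.
  destruct (Lub_Rbar (CV_disk aa)); simpl in *; auto; lra.
Qed.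

Lemma G_le1 rho : 1 <= rho -> ex_series aa -> G rho <= Series aa / rho.
Proof.
  intros Hr Hex. unfold Rdiv. rewrite Rmult_comm, <- Series_scal_l. apply Series_le.
  - intros n. split. apply Rmult_le_pos; auto. apply geo_nonneg; lra.
    unfold aa. replace (f n * (tprod t n / rho ^ S n)) with (f n * tprod t n * / rho ^ S n) by (unfold Rdiv; ring).
    rewrite Rmult_comm. apply Rmult_le_compat_r. apply aa_nonneg.
    apply Rinv_le_contravar. lra. cbn [pow]. rewrite <- (Rmult_1_r rho) at 1. apply Rmult_le_compat_l. lra.
    apply pow_R1_Rle; auto.
  - apply ex_series_scalR; auto.
Qed.

Lemma G_mono r1 r2 : 0 < r1 <= r2 -> ex_series (fun n => f n * (tprod t n / r1 ^ (S n))) ->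
  ex_series (fun n => f n * (tprod t n / r2 ^ (S n))) /\ G r2 <= G r1.
Proof.
  intros Hr Hex.
  assert (Hpt : forall n, 0 <= f n * (tprod t n / r2 ^ (S n)) <= f n * (tprod t n / r1 ^ (S n))).
  { intros n. split. apply Rmult_le_pos; auto. apply geo_nonneg; lra.
    apply Rmult_le_compat_l; auto. unfold Rdiv. apply Rmult_le_compat_l. apply tprod_nonneg; auto.
    apply Rinv_le_contravar. apply pow_lt; lra. apply pow_incr; lra. }
  split. apply (ex_series_leR _ _ Hpt Hex). apply (Series_le _ _ Hpt Hex).
Qed.




Lemma G1 : G 1 = Series aa.
Proof. unfold G, G. apply Series_ext. intros n. unfold aa, aa. rewrite pow1. field. Qed.

Lemma aa_ex : ex_series aa.
Proof. apply (ex_series_extR (fun n => f n * (tprod t n / 1 ^ (S n)))). intros n. unfold aa, aa. rewrite pow1. field.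
  apply G_ex; auto; lra. Qed.

Lemma R0_nonneg : 0 <= Series aa.
Proof. apply Series_nonneg. intros; apply aa_nonneg; auto. apply aa_ex. Qed.

Lemma PS1 : PSeries aa 1 = Series aa.
Proof. unfold PSeries. apply Series_ext. intros n. rewrite pow1. ring. Qed.

Lemma PS_le1 z : 0 <= z <= 1 -> PSeries aa z <= Series aa.
Proof.
  intros Hz. unfold PSeries. apply Series_le. intros n. split.
  apply Rmult_le_pos. apply aa_nonneg; auto. apply pow_le; lra.
  rewrite <- (Rmult_1_r (aa n)) at 2. apply Rmult_le_compat_l. apply aa_nonneg; auto.
  apply pow_le1'; lra. apply aa_ex.
Qed.

Lemma PS_ge1 z : 1 <= z -> ex_series (fun n => aa n * z ^ n) -> Series aa <= PSeries aa z.
Proof.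
  intros Hz Hex. unfold PSeries. apply Series_le. intros n. split. apply aa_nonneg; auto.
  rewrite <- (Rmult_1_r (aa n)) at 1. apply Rmult_le_compat_l. apply aa_nonneg; auto.
  apply pow_R1_Rle; lra. auto.
Qed.

Lemma F_cont z z' : 0 <= z -> z < z' -> ex_series (fun n => aa n * z' ^ n) ->
  continuity_pt (fun z => z * PSeries aa z - 1) z.
Proof.
  intros Hz Hzz Hex.
  apply (continuity_pt_minus (fun z => z * PSeries aa z) (fun _ => 1)).
  apply (continuity_pt_mult (fun z => z) (PSeries aa)). apply continuity_pt_id.
  apply PSeries_continuity. apply radius_lt with z'; auto.
  apply continuity_pt_const. intros a b; auto.
Qed.

Lemma G_root z : 0 < z -> z * PSeries aa z = 1 -> G (/ z) = 1.
Proof.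
  intros Hz H. rewrite G_PS by (apply Rinv_0_lt_compat; auto). rewrite Rinv_inv. auto.
Qed.

Lemma G_ex' rho : th < rho -> ex_series (fun n => f n * (tprod t n / rho ^ (S n))).
Proof. intros. apply G_ex; auto. Qed.

Lemma ex_z' : ex_series (fun n => aa n * (2 / (1 + th)) ^ n).
Proof.
  replace (2 / (1 + th)) with (/ ((1 + th)/2)) by (field; lra). apply ex_PS; auto. lra.
Qed.

Lemma z'_gt : 1 < 2 / (1 + th).
Proof. apply Rmult_lt_reg_r with (1 + th). lra. unfold Rdiv. rewrite Rmult_assoc, Rinv_l by lra. lra. Qed.

Lemma not_spec_above rho : 0 <= rho -> Rbar_lt (spec_rad p (AC f t)) rho -> ~ in_spectrum p (AC f t) (RtoC rho).
Proof.
  intros Hr Hs Hin. pose proof (spec_lb _ _ _ Hin). rewrite Cmod_RtoC_nonneg in H by auto.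
  apply (Rbar_le_not_lt _ _ H Hs).
Qed.

Definition eN (M : nat) : nat -> C := fun n => if Nat.eqb n M then RtoC 1 else RtoC 0.

Lemma eN_lp M : in_lpC p (eN M).
Proof.
  induction M.
  - replace (eN 0) with e0. apply e0_lp; auto. apply functional_extensionality; intros [|n]; reflexivity.
  - unfold in_lpC in *. destruct (lp_shift p _ Hp (fun i => Cmod_ge_0 _) IHM) as [H _].
    destruct (lp_mono p (fun i => Cmod (eN (S M) i)) (shift (fun i => Cmod (eN M i))) 1 Hp ltac:(lra)) as [H2 _]; auto.
    intros [|i]; simpl. lra. apply Cmod_ge_0.
    intros [|i]; unfold eN, shift; simpl; rewrite ?Cmod_0, ?Cmod_1; try lra.
    destruct (Nat.eqb i M); rewrite ?Cmod_0, ?Cmod_1; lra.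
Qed.

Lemma zero_spec : Series aa = 0 -> in_spectrum p (AC f t) (RtoC 0).
Proof.
  intros H0. destruct (classic (in_spectrum p (AC f t) (RtoC 0))) as [H|H]; auto.
  assert (Hex : exists n, t n = 0).
  { unfold in_spectrum in H. apply NNPP in H. destruct H as [S0 [Hb HS]].
    destruct (HS e0 (e0_lp p Hp)) as [_ H2]. set (y := S0 e0) in *.
    assert (Hty : forall k, (RtoC (t k) * y k)%C = RtoC 0).
    { intros k. specialize (H2 (S k)). rewrite A_decomp in H2.
      change (e0 (S k)) with (RtoC 0) in H2. change (TC t y (S k)) with (RtoC (t k) * y k)%C in H2.
      replace (RtoC (t k) * y k)%C with (- (0 * y (S k) - (RtoC (t k) * y k + Cser f y * RtoC 0)))%C by ring.
      rewrite H2. ring. }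
    assert (Hc : Cser f y <> RtoC 0).
    { intros E. specialize (H2 0%nat). rewrite A_decomp, E in H2. unfold e0, TC in H2.
      apply (f_equal fst) in H2. simpl in H2. lra. }
    apply NNPP. intros Hn. apply Hc. unfold Cser.
    assert (Hz : forall i, (RtoC (f i) * y i)%C = RtoC 0).
    { intros i. destruct (Req_dec (f i) 0) as [E|E]. rewrite E. ring.
      destruct (Req_dec (t i) 0) as [E2|E2]. exfalso; apply Hn; eauto.
      specialize (Hty i).
      assert (Hti : RtoC (t i) <> RtoC 0). { intros E3. apply E2. apply (f_equal fst) in E3. simpl in E3. auto. }
      assert (E3 : y i = RtoC 0).
      { replace (y i) with (/ RtoC (t i) * (RtoC (t i) * y i))%C by (field; auto). rewrite Hty. ring. }
      rewrite E3. ring. }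
    assert (Hz1 : forall i, f i * fst (y i) = 0). { intros i. specialize (Hz i). apply (f_equal fst) in Hz. simpl in Hz. lra. }
    assert (Hz2 : forall i, f i * snd (y i) = 0). { intros i. specialize (Hz i). apply (f_equal snd) in Hz. simpl in Hz. lra. }
    rewrite (Series_ext _ _ Hz1), (Series_ext _ _ Hz2), Series_0'. auto. }
  assert (Hmin : forall n, t n = 0 -> exists M, t M = 0 /\ forall j, (j < M)%nat -> t j <> 0).
  { intros n. induction n as [n IH] using (well_founded_induction Wf_nat.lt_wf). intros Hn.
    destruct (classic (exists j, (j < n)%nat /\ t j = 0)) as [[j [Hj Hj0]]|Hno].
    apply (IH j Hj Hj0). exists n. split; auto. intros j Hj E. apply Hno; eauto. }
  destruct Hex as [n Hn]. destruct (Hmin n Hn) as [M [HM HMj]].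
  assert (HP : 0 < tprod t M).
  { clear -Ht HMj. induction M; simpl. lra. apply Rmult_lt_0_compat. apply IHM. intros j Hj; apply HMj; lia.
    pose proof (Ht M). pose proof (HMj M ltac:(lia)). lra. }
  assert (HfM : f M = 0).
  { assert (aa M = 0) by (apply (Series_zero_inv aa M); auto; [intros; apply aa_nonneg; auto | apply aa_ex]).
    unfold aa, aa in H1. apply Rmult_integral in H1. destruct H1; auto. lra. }
  apply (eig_spec p _ (RtoC 0) (eN M) M Hp (eN_lp M)).
  - unfold eN. rewrite Nat.eqb_refl. intros E. apply (f_equal fst) in E. simpl in E. lra.
  - intros k. rewrite A_decomp.
    assert (Hs : Cser f (eN M) = RtoC 0).
    { unfold Cser.
      assert (Z1 : forall i, f i * fst (eN M i) = 0).
      { intros i; unfold eN; destruct (Nat.eqb i M) eqn:E; simpl; try ring.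
        apply Nat.eqb_eq in E; subst; rewrite HfM; ring. }
      assert (Z2 : forall i, f i * snd (eN M i) = 0).
      { intros i; unfold eN; destruct (Nat.eqb i M) eqn:E; simpl; ring. }
      rewrite (Series_ext _ _ Z1), (Series_ext _ _ Z2), Series_0'. auto. }
    rewrite Hs. destruct k; unfold TC, eN; simpl. ring.
    destruct (Nat.eqb k M) eqn:E. apply Nat.eqb_eq in E; subst. rewrite HM. ring. ring.
  - intros k. rewrite A_decomp. rewrite (Cser_zero f). destruct k; unfold TC; simpl; ring.
Qed.



Let s := spec_rad p (AC f t).


Lemma ub_of c : th <= c -> (forall rho, c < rho -> G rho < 1) -> Rbar_le s c.
Proof. intros Hc HG. apply spec_ub. apply A_ub; auto. Qed.

Lemma eig_of rho : th < rho -> G rho = 1 -> Rbar_le rho s.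
Proof.
  intros Hr HG. pose proof (A_eig rho ltac:(lra) (lp_geo rho Hr) HG) as H.
  pose proof (spec_lb _ _ _ H). rewrite Cmod_RtoC_nonneg in H0 by lra. auto.
Qed.

Lemma G_lt_above R0 : R0 = Series aa -> 1 <= R0 -> forall rho, R0 < rho -> G rho < 1.
Proof.
  intros E H1 rho Hr. pose proof (G_le1 rho ltac:(lra) aa_ex).
  fold G aa in H. rewrite <- E in H. apply Rle_lt_trans with (R0 / rho). auto.
  apply Rmult_lt_reg_r with rho. lra. unfold Rdiv. rewrite Rmult_assoc, Rinv_l by lra. lra.
Qed.

Lemma case_gt : 1 < Series aa -> Rbar_le s (Series aa) /\ Rbar_lt 1 s.
Proof.
  intros H. set (R0 := Series aa) in *.
  split.
  - apply ub_of. lra. apply G_lt_above; auto; lra.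
  - set (z' := 2 / (1 + th)).
    assert (Hz' : 1 < z') by (apply z'_gt; auto).
    assert (Hexz : ex_series (fun n => aa n * z' ^ n)) by (apply ex_z'; auto).
    assert (HiR : 0 < / R0 <= 1). { split. apply Rinv_0_lt_compat; lra. rewrite <- Rinv_1. apply Rinv_le_contravar; nra. }
    destruct (ivt_root (fun z => z * PSeries aa z - 1) (/ R0) 1) as [z [Hz Fz]].
    + lra.
    + intros z Hz. apply (F_cont z z'); auto; lra.
    + pose proof (PS_le1 (/ R0) ltac:(lra)). fold aa R0 in H0.
      assert (/ R0 * PSeries aa (/ R0) <= / R0 * R0) by (apply Rmult_le_compat_l; lra).
      rewrite Rinv_l in H1 by lra. lra.
    + rewrite PS1. fold aa R0. lra.
    + assert (Hz1 : z <> 1). { intros ->. rewrite PS1 in Fz. fold aa R0 in Fz. lra. }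
      assert (Hr : 1 < / z). { rewrite <- Rinv_1. apply Rinv_lt_contravar; nra. }
      assert (HG : G (/ z) = 1) by (apply G_root; lra).
      pose proof (eig_of (/ z) ltac:(lra) HG).
      apply Rbar_lt_le_trans with (/ z); [simpl; lra | auto].
Qed.

Lemma case_eq : Series aa = 1 -> s = Finite 1.
Proof.
  intros H. apply Rbar_le_antisym.
  - apply ub_of. lra. apply G_lt_above; auto; lra.
  - apply eig_of. lra. rewrite G1. auto.
Qed.

Lemma lt_upper : Series aa < 1 -> Rbar_lt s 1.
Proof.
  intros H. set (R0 := Series aa) in *.
  set (z' := 2 / (1 + th)).
  assert (Hz' : 1 < z') by (apply z'_gt; auto).
  assert (Hexz : ex_series (fun n => aa n * z' ^ n)) by (apply ex_z'; auto).
  pose proof (F_cont 1 z' ltac:(lra) Hz' Hexz) as Hc.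
  unfold continuity_pt, continue_in, limit1_in, limit_in in Hc.
  destruct (Hc ((1 - R0) / 2) ltac:(lra)) as [alp [Halp Hal]].
  set (z1 := Rmin (1 + alp / 2) ((1 + z') / 2)).
  assert (Hz1 : 1 < z1 < z'). { unfold z1. unfold Rmin. destruct (Rle_dec (1 + alp / 2) ((1 + z') / 2)); lra. }
  assert (Hz1a : Rabs (z1 - 1) < alp). { unfold z1, Rmin. destruct (Rle_dec (1 + alp / 2) ((1 + z') / 2)); rewrite Rabs_pos_eq; lra. }
  specialize (Hal z1). simpl in Hal. unfold R_dist in Hal.
  assert (HF1 : 1 * PSeries aa 1 - 1 = R0 - 1) by (rewrite PS1; fold aa R0; ring).
  assert (Hlt : z1 * PSeries aa z1 < 1).
  { assert (Rabs (z1 * PSeries aa z1 - 1 - (1 * PSeries aa 1 - 1)) < (1 - R0) / 2).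
    { apply Hal. split. split. constructor. lra. auto. }
    rewrite HF1 in H0. apply Rabs_def2 in H0. lra. }
  set (c := / z1).
  assert (Hc1 : c < 1). { unfold c. rewrite <- Rinv_1. apply Rinv_lt_contravar; nra. }
  assert (Hcth : th < c).
  { unfold c. apply Rlt_trans with (/ z'). unfold z'. replace (/ (2 / (1 + th))) with ((1 + th) / 2) by (field; lra). lra.
    apply Rinv_lt_contravar; [apply Rmult_lt_0_compat; lra | lra]. }
  assert (HGc : G c < 1). { unfold c. rewrite G_PS by (apply Rinv_0_lt_compat; lra). rewrite Rinv_inv. auto. }
  apply Rbar_le_lt_trans with c.
  - apply ub_of. lra. intros rho Hr.
    destruct (G_mono c rho ltac:(lra) (G_ex c Hcth)) as [_ Hm].
    fold G in Hm. lra.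
  - simpl. auto.
Qed.

Lemma lt_lower : 0 < Series aa < 1 -> Rbar_le (Series aa) s.
Proof.
  intros H. set (R0 := Series aa) in *.
  apply Rbar_not_lt_le. intros Hlt.
  assert (Hl0 : exists l0, 0 < l0 < R0 /\ Rbar_lt s l0).
  { unfold s in *. destruct (spec_rad p (AC f t)) as [s0| |]; simpl in Hlt |- *.
    - exists (Rmax ((s0 + R0) / 2) (R0 / 2)). unfold Rmax. destruct (Rle_dec ((s0 + R0) / 2) (R0 / 2)); split; try lra.
    - contradiction.
    - exists (R0 / 2). split; auto. lra. }
  destruct Hl0 as [l0 [Hl0 Hsl0]].
  pose proof (not_spec_above l0 ltac:(lra) Hsl0) as Hns.
  unfold in_spectrum in Hns. apply NNPP in Hns. destruct Hns as [S0 [Hb HS]].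
  destruct (HS e0 (e0_lp p Hp)) as [_ H2]. set (y := S0 e0) in *.
  assert (Hy : in_lpC p y) by (apply (proj1 Hb); apply e0_lp; auto).
  assert (Hl0C : RtoC l0 <> RtoC 0). { intros E. apply (f_equal fst) in E. simpl in E. lra. }
  assert (yrec : forall k, y (S k) = (/ RtoC l0 * (RtoC (t k) * y k))%C).
  { intros k. specialize (H2 (S k)). rewrite A_decomp in H2.
    change (e0 (S k)) with (RtoC 0) in H2. change (TC t y (S k)) with (RtoC (t k) * y k)%C in H2.
    replace (y (S k)) with (/ RtoC l0 * ((RtoC l0 * y (S k) - (RtoC (t k) * y k + Cser f y * RtoC 0)) + RtoC (t k) * y k))%C
      by (field; auto).
    rewrite H2. ring. }
  assert (yform : forall n, y n = (y 0%nat * RtoC (tprod t n / l0 ^ n))%C).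
  { intros n. induction n.
    - simpl. replace (1 / 1) with 1 by field. ring.
    - rewrite yrec, IHn. rewrite <- RtoC_inv by lra.
      apply injective_projections; simpl; field; split; try lra; apply pow_nonzero; lra. }
  assert (Hy0 : y 0%nat <> RtoC 0).
  { intros E. assert (Ey : y = fun _ => RtoC 0).
    { apply functional_extensionality; intros n. rewrite yform, E. ring. }
    specialize (H2 0%nat). rewrite A_decomp in H2. rewrite Ey in H2. rewrite (Cser_zero f) in H2.
    unfold TC, e0 in H2. apply (f_equal fst) in H2. simpl in H2. lra. }
  assert (Hmy : 0 < Cmod (y 0%nat)) by (apply Cmod_gt_0; auto).
  set (b := fun n => tprod t n / l0 ^ n).
  assert (Hb0 : forall n, 0 <= b n).
  { intros n. unfold b. apply Rmult_le_pos. apply tprod_nonneg; auto. left; apply Rinv_0_lt_compat, pow_lt; lra. }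
  assert (Hbm : lp_mem p b).
  { destruct (lp_mono p b (fun i => Cmod (y i)) (/ Cmod (y 0%nat)) Hp) as [Hm _]; auto.
    left; apply Rinv_0_lt_compat; auto. intros; apply Cmod_ge_0.
    intros n. split; auto. rewrite (yform n), Cmod_mult. rewrite (Cmod_RtoC_nonneg (tprod t n / l0 ^ n)) by apply Hb0.
    right. unfold b. field. split. apply pow_nonzero; lra. lra. }
  destruct HF as [Cf [HCf HHf]]. destruct (HHf b Hb0 Hbm) as [Hexb _].
  set (z0 := / l0).
  assert (Hexz0 : ex_series (fun n => aa n * z0 ^ n)).
  { apply (ex_series_extR (fun n => f n * b n)); auto. intros n. unfold aa, aa, b, z0. rewrite pow_inv. unfold Rdiv; ring. }
  assert (HiR : 1 < / R0). { rewrite <- Rinv_1. apply Rinv_lt_contravar; nra. }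
  assert (Hz0 : / R0 < z0). { unfold z0. apply Rinv_lt_contravar; nra. }
  assert (HexR : ex_series (fun n => aa n * (/ R0) ^ n)).
  { apply (ex_series_leR _ (fun n => aa n * z0 ^ n)); [|apply Hexz0]. intros n. split.
    apply Rmult_le_pos. apply aa_nonneg; auto. apply pow_le; lra.
    apply Rmult_le_compat_l. apply aa_nonneg; auto. apply pow_incr; lra. }
  destruct (ivt_root (fun z => z * PSeries aa z - 1) 1 (/ R0)) as [z [Hz Fz]].
  - lra.
  - intros z Hz. apply (F_cont z z0); auto; lra.
  - rewrite PS1. fold aa R0. lra.
  - pose proof (PS_ge1 (/ R0) ltac:(lra) HexR). fold aa R0 in H0.
    assert (/ R0 * R0 <= / R0 * PSeries aa (/ R0)) by (apply Rmult_le_compat_l; lra).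
    rewrite Rinv_l in H1 by lra. lra.
  - assert (Hz1 : z <> 1). { intros ->. rewrite PS1 in Fz. fold aa R0 in Fz. lra. }
    set (rho := / z).
    assert (Hrho1 : R0 <= rho). { unfold rho. rewrite <- (Rinv_inv R0). apply Rinv_le_contravar; nra. }
    assert (Hrho2 : rho < 1). { unfold rho. rewrite <- Rinv_1. apply Rinv_lt_contravar; nra. }
    assert (HG : G rho = 1) by (apply G_root; lra).
    assert (Hgeo : lp_mem p (fun n => tprod t n / rho ^ (S n))).
    { destruct (lp_mono p (fun n => tprod t n / rho ^ (S n)) b (/ rho) Hp) as [Hm _]; auto.
      left; apply Rinv_0_lt_compat; lra.
      intros n. split. apply geo_nonneg; lra. unfold b. cbn [pow].
      unfold Rdiv. rewrite Rinv_mult. replace (/ rho * (tprod t n * / l0 ^ n)) with (tprod t n * (/ rho * / l0 ^ n)) by ring.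
      apply Rmult_le_compat_l. apply tprod_nonneg; auto. apply Rmult_le_compat_l. left; apply Rinv_0_lt_compat; lra.
      apply Rinv_le_contravar. apply pow_lt; lra. apply pow_incr; lra. }
    pose proof (A_eig rho ltac:(lra) Hgeo HG) as Hin.
    revert Hin. apply (not_spec_above rho ltac:(lra)).
    apply Rbar_lt_le_trans with l0; [auto | simpl; lra].
Qed.

Lemma case_lt : Series aa < 1 -> Rbar_le (Series aa) s /\ Rbar_lt s 1.
Proof.
  intros H. split; [| apply lt_upper; auto].
  pose proof R0_nonneg. fold aa in H0.
  destruct (Req_dec (Series aa) 0) as [E|E].
  - rewrite E. pose proof (spec_lb _ _ _ (zero_spec E)). rewrite Cmod_0 in H1. auto.
  - apply lt_lower. lra.
Qed.

End A.


Lemma th_exists (t : nat -> R) : (forall n, 0 <= t n <= 1) -> Rbar_lt (LimSup_seq t) (Finite 1) ->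
  exists th N, 0 < th < 1 /\ forall n, (N <= n)%nat -> t n <= th.
Proof.
  intros Ht H. destruct (ex_LimSup_seq t) as [l Hl]. rewrite (is_LimSup_seq_unique _ _ Hl) in H.
  destruct l as [l0| |]; simpl in H, Hl.
  - set (th := Rmax ((l0 + 1) / 2) (1 / 2)).
    assert (Hth : l0 < th /\ 0 < th < 1). { unfold th, Rmax. destruct (Rle_dec ((l0 + 1) / 2) (1 / 2)); lra. }
    assert (He : 0 < th - l0) by lra.
    destruct (Hl (mkposreal _ He)) as [_ [N HN]]. exists th, N. split. lra.
    intros n Hn. specialize (HN n Hn). simpl in HN. lra.
  - contradiction.
  - destruct (Hl (1/2)) as [N HN]. exists (1/2), N. split. lra. intros n Hn. specialize (HN n Hn). lra.
Qed.

Lemma Rres_zero t lam n : Rres t lam (fun _ => RtoC 0) n = RtoC 0.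
Proof. induction n; simpl. unfold Cdiv; ring. rewrite IHn. unfold Cdiv; ring. Qed.

Lemma K_spec p f t th N S : Rbar_le 1 p -> (forall i, 0 <= f i) -> holderF p f ->
  (forall n, 0 <= t n <= 1) -> 0 < th < 1 -> (forall n, (N <= n)%nat -> t n <= th) ->
  bounded_on Cmod p S ->
  (forall x, in_lpC p x -> (forall i, S (IminusTC t x) i = x i) /\ (forall i, IminusTC t (S x) i = x i)) ->
  spec_rad p (fun x => FC f (S x)) = Finite (Series (aa f t)).
Proof.
  intros Hp Hf0 HF Ht Hth HN HSb HSid.
  set (R1 := Rres t (RtoC 1)).
  assert (H1 : RtoC 1 <> RtoC 0). { intros E. apply (f_equal fst) in E. simpl in E. lra. }
  assert (HR1b : bounded_on Cmod p R1).
  { apply (Rres_bounded p t (RtoC 1) th N); auto. rewrite Cmod_1. lra. }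
  assert (HR1m : forall x, in_lpC p x -> in_lpC p (R1 x)) by (apply (proj1 HR1b)).
  assert (HSR : forall x, in_lpC p x -> S x = R1 x).
  { intros x Hx. apply functional_extensionality; intros i.
    assert (E : IminusTC t (R1 x) = x).
    { apply functional_extensionality; intros j. unfold IminusTC, R1. rewrite <- (Rres_left t (RtoC 1) x j H1). ring. }
    rewrite <- E at 1. apply (HSid (R1 x) (HR1m x Hx)). }
  set (R0 := Series (aa f t)).
  assert (HR0 : 0 <= R0) by (apply (R0_nonneg p f t th N); auto).
  set (phi := fun x => Cser f (S x)).
  assert (HK : forall x n, FC f (S x) n = (RtoC 0 + phi x * e0 n)%C).
  { intros x [|n]; unfold FC, phi, Cser, e0; apply injective_projections; simpl; ring. }
  assert (Hphie0 : phi e0 = RtoC R0).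
  { unfold phi. rewrite (HSR e0 (e0_lp p Hp)). unfold Cser, R1.
    assert (Z1 : forall i, f i * fst (Rres t (RtoC 1) e0 i) = aa f t i).
    { intros i. rewrite Rres_e0_real by lra. unfold aa. cbn [fst RtoC]. rewrite pow1. field. }
    assert (Z2 : forall i, f i * snd (Rres t (RtoC 1) e0 i) = 0).
    { intros i. rewrite Rres_e0_real by lra. cbn [snd RtoC]. ring. }
    rewrite (Series_ext _ _ Z1), (Series_ext _ _ Z2), Series_0'. auto. }
  assert (Hphilin : forall x y a b, in_lpC p x -> in_lpC p y -> phi (fun j => a * x j + b * y j)%C = (a * phi x + b * phi y)%C).
  { intros x y a b Hx Hy. unfold phi. rewrite (HSR _ (proj1 (lpC_lin p x y a b Hp Hx Hy))), (HSR x Hx), (HSR y Hy).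
    replace (R1 (fun j => a * x j + b * y j)%C) with (fun j => a * R1 x j + b * R1 y j)%C.
    apply (Cser_lin p); auto.
    apply functional_extensionality; intros j. unfold R1. rewrite Rres_lin; auto. }
  assert (Hphib : exists C, 0 <= C /\ forall x, in_lpC p x -> Cmod (phi x) <= C * lp_norm p (fun i => Cmod (x i))).
  { destruct (Cser_bound p f Hf0 HF) as [C [HC HCb]]. destruct (bounded_pos Cmod p R1 Hp Cmod_ge_0 HR1b) as [M [HM HMb]].
    exists (C * M). split. apply Rmult_le_pos; auto. intros x Hx. unfold phi. rewrite (HSR x Hx).
    eapply Rle_trans. apply HCb; auto. rewrite Rmult_assoc. apply Rmult_le_compat_l; auto. }
  assert (Hnot : forall lam, R0 < Cmod lam -> ~ in_spectrum p (fun x => FC f (S x)) lam).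
  { intros lam Hl. assert (Hlam : lam <> RtoC 0). { intros E. rewrite E, Cmod_0 in Hl. lra. }
    assert (HL : 0 < Cmod lam) by lra.
    apply (rank1_not_spec p _ (fun _ _ => RtoC 0) (fun x n => (x n / lam)%C) phi lam Hp HK).
    - intros; ring.
    - intros; apply zero_lp; auto.
    - intros. field. auto.
    - intros. field. auto.
    - intros. field. auto.
    - split.
      + intros x Hx. destruct (lp_mono p (fun i => Cmod (x i / lam)%C) (fun i => Cmod (x i)) (/ Cmod lam) Hp) as [Hm _]; auto.
        left; apply Rinv_0_lt_compat; auto. intros; apply Cmod_ge_0.
        intros i. split. apply Cmod_ge_0. rewrite Cmod_div by auto. unfold Rdiv. lra.
      + exists (/ Cmod lam). intros x Hx.
        destruct (lp_mono p (fun i => Cmod (x i / lam)%C) (fun i => Cmod (x i)) (/ Cmod lam) Hp) as [_ Hn]; auto.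
        left; apply Rinv_0_lt_compat; auto. intros; apply Cmod_ge_0.
        intros i. split. apply Cmod_ge_0. rewrite Cmod_div by auto. unfold Rdiv. lra.
    - auto.
    - auto.
    - intros E.
      assert (Ef : (fun n => (e0 n / lam)%C) = (fun n => (/ lam * e0 n + 0 * e0 n)%C)).
      { apply functional_extensionality; intros n. field; auto. }
      rewrite Ef, Hphilin, Hphie0 in E by (apply e0_lp; auto).
      assert (El : lam = RtoC R0). { replace (RtoC R0) with (lam * (/ lam * RtoC R0 + 0 * RtoC R0))%C. rewrite E. ring. field. auto. }
      rewrite El, Cmod_RtoC_nonneg in Hl by auto. lra. }
  assert (Hin : in_spectrum p (fun x => FC f (S x)) (RtoC R0)).
  { apply (eig_spec p _ _ e0 0%nat Hp (e0_lp p Hp)).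
    - unfold e0. intros E. apply (f_equal fst) in E. simpl in E. lra.
    - intros n. rewrite HK, Hphie0. ring.
    - intros n. rewrite HK. unfold phi. rewrite (HSR _ (zero_lp p Hp)).
      replace (R1 (fun _ => RtoC 0)) with (fun _ : nat => RtoC 0).
      rewrite (Cser_zero f). ring.
      apply functional_extensionality; intros j. unfold R1. rewrite Rres_zero. auto. }
  unfold spec_rad. apply is_lub_Rbar_unique. split.
  - intros r [l [Hl ->]]. simpl. destruct (Rle_dec (Cmod l) R0) as [H|H]; auto.
    exfalso. apply (Hnot l); auto. lra.
  - intros b Hb. apply Hb. exists (RtoC R0). split; auto. rewrite Cmod_RtoC_nonneg; auto.
Qed.


Theorem mainTheorem8 (p q : Rbar) (f t : nat -> R)
  (hp : Rbar_le (Finite 1) p) (hq : Rbar_le (Finite 1) q)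
  (hpq : Rbar_plus (Rbar_inv p) (Rbar_inv q) = Finite 1)
  (hf : in_lpR q f) (hf0 : forall i, 0 <= f i)
  (ht : forall i, 0 <= t i <= 1)
  (hlim : Rbar_lt (LimSup_seq t) (Finite 1)) :
  (* F is bounded on l_p and preserves the cone l_p^+ *)
  bounded_on Rabs p (FR f) /\
  (forall x, in_lpR p x -> (forall i, 0 <= x i) -> forall i, 0 <= FR f x i) /\
  (* (I - T) is invertible in B(l_p) ... *)
  (exists S, bounded_on Cmod p S /\
     forall x, in_lpC p x ->
       (forall i, S (IminusTC t x) i = x i) /\ (forall i, IminusTC t (S x) i = x i)) /\
  (* ... and R0 := r(F (I-T)^{-1}) equals the series *)
  ex_series (fun i => f i * tprod t i) /\
  (forall S, bounded_on Cmod p S ->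
     (forall x, in_lpC p x ->
       (forall i, S (IminusTC t x) i = x i) /\ (forall i, IminusTC t (S x) i = x i)) ->
     let R0 := spec_rad p (fun x => FC f (S x)) in
     R0 = Finite (Series (fun i => f i * tprod t i)) /\
     (* trichotomy *)
     ((Rbar_le (spec_rad p (AC f t)) R0 /\ Rbar_lt (Finite 1) (spec_rad p (AC f t))) \/
      (R0 = Finite 1 /\ spec_rad p (AC f t) = Finite 1) \/
      (Rbar_le R0 (spec_rad p (AC f t)) /\ Rbar_lt (spec_rad p (AC f t)) (Finite 1)))).
Proof.
  assert (Hfq : lp_mem q f).
  { unfold in_lpR in hf. assert (E : (fun i => Rabs (f i)) = f).
    { apply functional_extensionality; intros; apply Rabs_pos_eq; auto. }
    rewrite E in hf. exact hf. }
  destruct (holder p q f hp hq hpq hf0 Hfq) as [Cf [HCf HH]].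
  assert (HF : holderF p f) by (exists Cf; split; auto).
  destruct (th_exists t ht hlim) as [th [N [Hth HN]]].
  assert (HFx : forall x, in_lpR p x -> ex_series (fun i => f i * Rabs (x i)) /\ Series (fun i => f i * Rabs (x i)) <= Cf * lp_norm p (fun i => Rabs (x i))).
  { intros x Hx. apply HH; auto. intros; apply Rabs_pos. }
  assert (HFR : forall x, (fun i => Rabs (FR f x i)) = (fun n => match n with O => Rabs (Series (fun i => f i * x i)) | S _ => 0 end)).
  { intros x. apply functional_extensionality; intros [|n]; simpl; auto. apply Rabs_R0. }
  assert (Hser : forall x, in_lpR p x -> Rabs (Series (fun i => f i * x i)) <= Cf * lp_norm p (fun i => Rabs (x i))).
  { intros x Hx. destruct (HFx x Hx) as [He Hs].
    assert (E : forall i, Rabs (f i * x i) = f i * Rabs (x i)) by (intros; rewrite Rabs_mult, (Rabs_pos_eq (f i)); auto).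
    assert (He2 : ex_series (fun i => Rabs (f i * x i))) by (apply (ex_series_extR _ _ (fun i => eq_sym (E i))); auto).
    pose proof (Series_Rabs _ He2) as HR. cbv beta in HR. rewrite (Series_ext _ _ E) in HR. lra. }
  split; [|split; [|split; [|split]]].
  - split.
    + intros x Hx. rewrite HFR. apply (lp_single p _ hp (Rabs_pos _)).
    + exists Cf. intros x Hx. rewrite HFR. eapply Rle_trans. apply (lp_single p _ hp (Rabs_pos _)). apply Hser; auto.
  - intros x Hx Hx0 [|i]; simpl; [|lra].
    destruct (HFx x Hx) as [He _].
    apply Series_nonneg. intros; apply Rmult_le_pos; auto.
    apply (ex_series_extR _ _ (fun i => f_equal (Rmult (f i)) (Rabs_pos_eq _ (Hx0 i)))); auto.
  - exists (Rres t (RtoC 1)). assert (H1 : RtoC 1 <> RtoC 0). { intros E. apply (f_equal fst) in E. simpl in E. lra. }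
    split. apply (Rres_bounded p t (RtoC 1) th N); auto. rewrite Cmod_1; lra.
    intros x Hx. split.
    + intros i. replace (IminusTC t x) with (fun j => (RtoC 1 * x j - TC t x j)%C). apply Rres_right; auto.
      apply functional_extensionality; intros j. unfold IminusTC. ring.
    + intros i. unfold IminusTC. rewrite <- (Rres_left t (RtoC 1) x i H1). ring.
  - apply (aa_ex p f t th N); auto.
  - intros S HSb HSid R0.
    assert (ER : R0 = Finite (Series (fun i => f i * tprod t i))).
    { unfold R0. apply (K_spec p f t th N S); auto. }
    split; auto. rewrite ER.
    destruct (total_order_T (Series (aa f t)) 1) as [[Hlt|Heq]|Hgt].
    + right; right. apply (case_lt p f t th N); auto.
    + right; left. split. f_equal. auto. apply (case_eq p f t th N); auto.
    + left. apply (case_gt p f t th N); auto.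
Qed.
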